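(* There exist constants $C\ge2$, $K$ and $M$ such that for all integers $k,k'$ with $K\le k<k'\le2k$, setting $c=c(k,k')=e^{-k/2+5k'/6}$, one can transform $\cos(kx)e^{-kt}$ into $c\cos(k'y)e^{-k't}$ within $\mathbb{T}^2\times[0,C]$ via a solution $u$ of $\ddot u+\operatorname{div}(A\nabla u)=0$ with $A$ in the regularity class $R(80,60)$. Moreover, for $t\in[0,C]$, $u=f(t)\cos(kx)+g(t)\cos(k'y)$ with $f,g\in C^2$ satisfying, for $0\le\alpha\le2$, $$|f^{(\alpha)}(t)|\le Mk^{7\alpha/3}e^{-kt},\qquad|g^{(\alpha)}(t)|\le M(k')^\alpha c\,e^{-k't/3};$$ on $[0,\frac1{100}]$, $u=\cos(kx)e^{-kt}$ and $A=\mathrm{Id}$; on $[C-\frac1{100},C]$, $u=c\cos(k'y)e^{-k't}$ and $A=\mathrm{Id}$.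
   Context: $\mathbb{T}^2=(\mathbb{R}/2\pi\mathbb{Z})^2$ with coordinates $(x,y)$; $t$ the third coordinate. $\ddot u+\operatorname{div}(A\nabla u)$ means $\partial_t^2u+\sum_{i,j\in\{x,y\}}\partial_i(A_{ij}\partial_ju)$ for a real $2\times2$ matrix function $A$. ''Transform $u_1$ into $u_2$ within $\mathbb{T}^2\times[T_1,T_2]$ via $u$'' means: $u$ is $C^2$, $A$ is $C^1$, $\ddot u+\operatorname{div}(A\nabla u)=0$ on $\mathbb{T}^2\times\mathbb{R}$, $u=u_1$, $A=\mathrm{Id}$ for $t\le T_1$ and $u=u_2$, $A=\mathrm{Id}$ for $t\ge T_2$. Regularity class $R(\Lambda,C)$: $\Lambda^{-1}|\xi|^2\le\xi^TA\xi\le\Lambda|\xi|^2$ for all $\xi\in\mathbb{R}^2$ at every point, and the entries of $A$ are $C^1$ with all first partial derivatives in $x,y,t$ bounded by $C$ in absolute value. *)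

(* Defs.v *)
From Stdlib Require Import Reals.
From Coquelicot Require Import Coquelicot.
Open Scope R_scope.

Definition fun3 := R -> R -> R -> R.

(* 2*pi-periodicity in x and y (i.e. f is a function on T^2 x R). *)
Definition periodic_T2 (f : fun3) : Prop :=
  forall x y t, f (x + 2 * PI) y t = f x y t /\ f x (y + 2 * PI) t = f x y t.

Definition continuous3 (f : fun3) : Prop :=
  forall x y t eps, 0 < eps -> exists delta, 0 < delta /\
    forall x' y' t', Rabs (x' - x) < delta -> Rabs (y' - y) < delta ->
      Rabs (t' - t) < delta -> Rabs (f x' y' t' - f x y t) < eps.

Definition dx (f : fun3) : fun3 := fun x y t => Derive (fun s => f s y t) x.
Definition dy (f : fun3) : fun3 := fun x y t => Derive (fun s => f x s t) y.
Definition dt (f : fun3) : fun3 := fun x y t => Derive (fun s => f x y s) t.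

Definition C1_3 (f : fun3) : Prop :=
  continuous3 f /\
  (forall x y t, ex_derive (fun s => f s y t) x /\
                 ex_derive (fun s => f x s t) y /\
                 ex_derive (fun s => f x y s) t) /\
  continuous3 (dx f) /\ continuous3 (dy f) /\ continuous3 (dt f).

Definition C2_3 (f : fun3) : Prop :=
  C1_3 f /\ C1_3 (dx f) /\ C1_3 (dy f) /\ C1_3 (dt f).

Definition C2_1 (f : R -> R) : Prop :=
  (forall t, ex_derive f t) /\ (forall t, ex_derive (Derive f) t) /\
  continuity (Derive_n f 2).

Record mat_field := MatField {
  axx : fun3; axy : fun3; ayx : fun3; ayy : fun3 }.

Definition is_Id_at (A : mat_field) x y t : Prop :=
  axx A x y t = 1 /\ axy A x y t = 0 /\ ayx A x y t = 0 /\ ayy A x y t = 1.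

Definition pde_holds (A : mat_field) (u : fun3) x y t : Prop :=
  dt (dt u) x y t
  + Derive (fun s => axx A s y t * dx u s y t + axy A s y t * dy u s y t) x
  + Derive (fun s => ayx A x s t * dx u x s t + ayy A x s t * dy u x s t) y
  = 0.

Definition transforms (u1 u2 : fun3) (T1 T2 : R) (u : fun3) (A : mat_field) : Prop :=
  periodic_T2 u /\ periodic_T2 (axx A) /\ periodic_T2 (axy A) /\
  periodic_T2 (ayx A) /\ periodic_T2 (ayy A) /\
  C2_3 u /\
  C1_3 (axx A) /\ C1_3 (axy A) /\ C1_3 (ayx A) /\ C1_3 (ayy A) /\
  (forall x y t, pde_holds A u x y t) /\
  (forall x y t, t <= T1 -> u x y t = u1 x y t /\ is_Id_at A x y t) /\
  (forall x y t, T2 <= t -> u x y t = u2 x y t /\ is_Id_at A x y t).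

Definition reg_class (Lam Cb : R) (A : mat_field) : Prop :=
  (forall x y t xi1 xi2,
     let q := xi1 * (axx A x y t * xi1 + axy A x y t * xi2)
            + xi2 * (ayx A x y t * xi1 + ayy A x y t * xi2) in
     / Lam * (xi1 ^ 2 + xi2 ^ 2) <= q /\ q <= Lam * (xi1 ^ 2 + xi2 ^ 2)) /\
  (forall a, (a = axx A \/ a = axy A \/ a = ayx A \/ a = ayy A) ->
     C1_3 a /\
     forall x y t, Rabs (dx a x y t) <= Cb /\ Rabs (dy a x y t) <= Cb /\
                   Rabs (dt a x y t) <= Cb).

(* Main.v *)
Require Import Defs.
From Stdlib Require Import Reals.
From Coquelicot Require Import Coquelicot.
From Stdlib Require Import Lra Lia Psatz FunctionalExtensionality ZArith.
Open Scope R_scope.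

Definition pw (a : R) (p q : R -> R) (t : R) : R := if Rle_dec t a then p t else q t.

Lemma pw_left a p q t : t <= a -> pw a p q t = p t.
Proof. intros; unfold pw; destruct (Rle_dec t a); lra. Qed.
Lemma pw_right a p q t : a < t -> pw a p q t = q t.
Proof. intros; unfold pw; destruct (Rle_dec t a); lra. Qed.

Lemma pw_derive a p q p' q' :
  (forall t, is_derive p t (p' t)) -> (forall t, is_derive q t (q' t)) ->
  p a = q a -> p' a = q' a ->
  forall t, is_derive (pw a p q) t (pw a p' q' t).
Proof.
  intros Hp Hq E E' t.
  destruct (Rtotal_order t a) as [Hlt|[Heq|Hgt]].
  - rewrite pw_left by lra.
    apply is_derive_ext_loc with p; [|apply Hp].
    apply filter_imp with (fun u => u < a); [|apply (open_lt a); auto].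
    intros; rewrite pw_left; lra.
  - subst t. rewrite pw_left by lra.
    apply is_derive_Reals. intros eps Heps.
    destruct (proj1 (is_derive_Reals _ _ _) (Hp a) eps Heps) as [d1 Hd1].
    destruct (proj1 (is_derive_Reals _ _ _) (Hq a) eps Heps) as [d2 Hd2].
    assert (Hd : 0 < Rmin d1 d2) by (apply Rmin_pos; apply cond_pos).
    exists (mkposreal _ Hd). simpl. intros h Hh0 Hh.
    assert (Rabs h < d1) by (eapply Rlt_le_trans; [apply Hh|apply Rmin_l]).
    assert (Rabs h < d2) by (eapply Rlt_le_trans; [apply Hh|apply Rmin_r]).
    rewrite (pw_left a p q a) by lra.
    destruct (Rle_dec (a+h) a).
    + rewrite pw_left by lra. apply Hd1; auto.
    + rewrite pw_right by lra. rewrite E, E'. apply Hd2; auto.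
  - rewrite pw_right by lra.
    apply is_derive_ext_loc with q; [|apply Hq].
    apply filter_imp with (fun u => a < u); [|apply (open_gt a); auto].
    intros; rewrite pw_right; lra.
Qed.

Lemma pw_cont a p q : continuity p -> continuity q -> p a = q a -> continuity (pw a p q).
Proof.
  intros Hp Hq E t eps Heps.
  destruct (Hp t eps Heps) as [d1 [Hd1 H1]].
  destruct (Hq t eps Heps) as [d2 [Hd2 H2]].
  destruct (Hp a eps Heps) as [d3 [Hd3 H3]].
  destruct (Hq a eps Heps) as [d4 [Hd4 H4]].
  simpl in *. unfold R_dist, D_x, no_cond in *.
  destruct (Rtotal_order t a) as [Hlt|[Heq|Hgt]].
  - exists (Rmin d1 (a - t)). split; [apply Rmin_pos; lra|].
    intros x [Hx1 Hx]. 
    assert (Rabs (x - t) < d1) by (eapply Rlt_le_trans; [apply Hx|apply Rmin_l]).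
    assert (Rabs (x - t) < a - t) by (eapply Rlt_le_trans; [apply Hx|apply Rmin_r]).
    apply Rabs_lt_between' in H0.
    rewrite !pw_left by lra. apply H1; auto.
  - subst t. exists (Rmin d3 d4). split; [apply Rmin_pos; lra|].
    intros x [Hx1 Hx].
    assert (Rabs (x - a) < d3) by (eapply Rlt_le_trans; [apply Hx|apply Rmin_l]).
    assert (Rabs (x - a) < d4) by (eapply Rlt_le_trans; [apply Hx|apply Rmin_r]).
    rewrite (pw_left a p q a) by lra.
    destruct (Rle_dec x a).
    + rewrite pw_left by lra. apply H3; auto.
    + rewrite pw_right by lra. rewrite E. apply H4; auto.
  - exists (Rmin d2 (t - a)). split; [apply Rmin_pos; lra|].
    intros x [Hx1 Hx]. 
    assert (Rabs (x - t) < d2) by (eapply Rlt_le_trans; [apply Hx|apply Rmin_l]).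
    assert (Rabs (x - t) < t - a) by (eapply Rlt_le_trans; [apply Hx|apply Rmin_r]).
    apply Rabs_lt_between' in H0.
    rewrite !pw_right by lra. apply H2; auto.
Qed.

Definition pw3 a b (p q r : R -> R) := pw a p (pw b q r).

Lemma pw3_derive a b p q r p' q' r' :
  a < b ->
  (forall t, is_derive p t (p' t)) -> (forall t, is_derive q t (q' t)) ->
  (forall t, is_derive r t (r' t)) ->
  p a = q a -> p' a = q' a -> q b = r b -> q' b = r' b ->
  forall t, is_derive (pw3 a b p q r) t (pw3 a b p' q' r' t).
Proof.
  intros Hab Hp Hq Hr E1 E1' E2 E2'. unfold pw3.
  apply pw_derive; auto.
  - apply pw_derive; auto.
  - rewrite pw_left; lra.
  - rewrite pw_left; lra.
Qed.

Lemma pw3_cont a b p q r : a < b -> continuity p -> continuity q -> continuity r ->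
  p a = q a -> q b = r b -> continuity (pw3 a b p q r).
Proof.
  intros. unfold pw3. apply pw_cont; auto. apply pw_cont; auto.
  rewrite pw_left; lra.
Qed.

Lemma pw3_cases a b p q r t (P : R -> Prop) : a < b ->
  (t <= a -> P (p t)) -> (a <= t <= b -> P (q t)) -> (b <= t -> P (r t)) ->
  P (pw3 a b p q r t).
Proof.
  intros. unfold pw3, pw. destruct (Rle_dec t a). auto.
  destruct (Rle_dec t b); [apply H1|apply H2]; lra.
Qed.

Lemma pw3_l a b p q r t : a < b -> t <= a -> pw3 a b p q r t = p t.
Proof. intros. unfold pw3. rewrite pw_left; lra. Qed.
Lemma pw3_m a b p q r t : a < b -> a <= t <= b -> q a = p a -> pw3 a b p q r t = q t.
Proof. intros. unfold pw3, pw. destruct (Rle_dec t a).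
  assert (t = a) by lra. subst. auto. destruct (Rle_dec t b); lra. Qed.
Lemma pw3_r a b p q r t : a < b -> b <= t -> r b = q b -> pw3 a b p q r t = r t.
Proof. intros. unfold pw3, pw. destruct (Rle_dec t a). lra. destruct (Rle_dec t b).
  assert (t = b) by lra. subst. auto. auto. Qed.

Definition P0 u := u^4*(35 - 84*u + 70*u^2 - 20*u^3).
Definition P1 u := 140 * u^3 * (1-u)^3.
Definition P2 u := 420 * u^2 * (1-u)^2 * (1-2*u).
Definition P3 u := 840 * u * (1-u) * (1 - 5*u + 5*u^2).
Definition Qp u := u^5 * (7 - 14*u + 10*u^2 - 5/2 * u^3).

Definition c0 : R -> R := fun _ => 0.
Definition c1 : R -> R := fun _ => 1.
Definition Sm := pw3 0 1 c0 P0 c1.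
Definition Sm1 := pw3 0 1 c0 P1 c0.
Definition Sm2 := pw3 0 1 c0 P2 c0.
Definition Sm3 := pw3 0 1 c0 P3 c0.
Definition Sig := pw3 0 1 c0 Qp (fun u => u - 1/2).

Lemma d_c0 t : is_derive c0 t (c0 t).
Proof. unfold c0. auto_derive; auto. Qed.
Lemma d_c1 t : is_derive c1 t (c0 t).
Proof. unfold c0, c1. auto_derive; auto. Qed.
Lemma d_P0 t : is_derive P0 t (P1 t).
Proof. unfold P0, P1. auto_derive; auto. ring. Qed.
Lemma d_P1 t : is_derive P1 t (P2 t).
Proof. unfold P1, P2. auto_derive; auto. ring. Qed.
Lemma d_P2 t : is_derive P2 t (P3 t).
Proof. unfold P2, P3. auto_derive; auto. ring. Qed.
Lemma d_Qp t : is_derive Qp t (P0 t).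
Proof. unfold Qp, P0. auto_derive; auto. field. Qed.

Lemma d_Sm t : is_derive Sm t (Sm1 t).
Proof. apply pw3_derive; try lra; try (intro; apply d_c0); try (intro; apply d_c1);
  try apply d_P0; unfold c0, c1, P0, P1; simpl; ring. Qed.
Lemma d_Sm1 t : is_derive Sm1 t (Sm2 t).
Proof. apply pw3_derive; try lra; try (intro; apply d_c0);
  try apply d_P1; unfold c0, P1, P2; simpl; ring. Qed.
Lemma d_Sm2 t : is_derive Sm2 t (Sm3 t).
Proof. apply pw3_derive; try lra; try (intro; apply d_c0);
  try apply d_P2; unfold c0, P2, P3; simpl; ring. Qed.
Lemma d_Sig t : is_derive Sig t (Sm t).
Proof. apply pw3_derive; try lra; try (intro; apply d_c0);
  try apply d_Qp; try (intro; unfold c1; auto_derive; auto; ring); unfold c0, c1, Qp, P0; simpl; field. Qed.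

Lemma cont_poly_gen (f : R -> R) : (forall t, ex_derive f t) -> continuity f.
Proof. intros H t. apply derivable_continuous_pt. apply ex_derive_Reals_0. auto. Qed.

Lemma cont_Sm3 : continuity Sm3.
Proof. apply pw3_cont; try lra; try (apply cont_poly_gen; intro; unfold c0, P3; auto_derive; auto);
  unfold c0, P3; simpl; ring. Qed.

Lemma Sm_bnd t : 0 <= Sm t <= 1.
Proof. unfold Sm. apply pw3_cases; try lra; unfold c0, c1; intros; try lra.
  unfold P0. assert (0 <= t^4) by (apply pow_le; lra).
  assert (34 - 50*t + 20*t^2 > 0) by nra.
  assert (0 <= (1-t)*(34 - 50*t + 20*t^2)) by (apply Rmult_le_pos; lra).
  assert (35 - 84*t + 70*t^2 - 20*t^3 >= 1) by (ring_simplify in H2; nra).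
  split. nra.
  assert (1 - t^4*(35 - 84*t + 70*t^2 - 20*t^3) = (1-t)^4*(1 + 4*t + 10*t^2 + 20*t^3)) by ring.
  assert (0 <= (1-t)^4) by (apply pow_le; lra).
  assert (0 <= (1-t)^4*(1 + 4*t + 10*t^2 + 20*t^3)) by (apply Rmult_le_pos; nra). lra. Qed.

Lemma Sm1_bnd t : 0 <= Sm1 t <= 35/16.
Proof. unfold Sm1. apply pw3_cases; try lra; unfold c0; intros; try lra.
  unfold P1. replace (140 * t ^ 3 * (1 - t) ^ 3) with (140 * (t*(1-t))^3) by ring.
  assert (0 <= t*(1-t) <= 1/4) by (pose proof (pow2_ge_0 (t-1/2)); split; nra). assert (0 <= (t*(1-t))^3) by (apply pow_le; lra).
  assert ((t*(1-t))^3 <= (1/4)^3) by (apply pow_incr; lra). lra. Qed.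

Lemma Sm2_bnd t : Rabs (Sm2 t) <= 27.
Proof. unfold Sm2. apply pw3_cases; try lra; unfold c0; intros; try (rewrite Rabs_R0; lra).
  unfold P2. replace (420 * t ^ 2 * (1 - t) ^ 2 * (1 - 2 * t)) with (420 * (t*(1-t))^2 * (1 - 2*t)) by ring.
  assert (0 <= t*(1-t) <= 1/4) by (pose proof (pow2_ge_0 (t-1/2)); split; nra). assert (0 <= (t*(1-t))^2 <= 1/16) by nra.
  apply Rabs_le. split; nra. Qed.

Lemma Sm3_bnd t : Rabs (Sm3 t) <= 210.
Proof. unfold Sm3. apply pw3_cases; try lra; unfold c0; intros; try (rewrite Rabs_R0; lra).
  unfold P3. replace (840 * t * (1 - t) * (1 - 5 * t + 5 * t ^ 2)) with (840 * (t*(1-t)) * (1 - 5*(t*(1-t)))) by ring.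
  assert (0 <= t*(1-t) <= 1/4) by (pose proof (pow2_ge_0 (t-1/2)); split; nra).
  apply Rabs_le. split; nra. Qed.

Lemma Sig_ge0 t : 0 <= Sig t.
Proof. unfold Sig. apply pw3_cases; try lra; unfold c0; intros; try lra.
  unfold Qp. assert (0 <= t^5) by (apply pow_le; lra).
  assert (13/2 - 15/2*t + 5/2*t^2 > 0) by nra.
  assert (0 <= (1-t)*(13/2 - 15/2*t + 5/2*t^2)) by (apply Rmult_le_pos; lra).
  assert (7 - 14*t + 10*t^2 - 5/2*t^3 >= 0) by nra. nra. Qed.

Lemma Sm_le0 t : t <= 0 -> Sm t = 0.  Proof. intros; unfold Sm; rewrite pw3_l; auto; lra. Qed.
Lemma Sm_ge1 t : 1 <= t -> Sm t = 1.  Proof. intros; unfold Sm; rewrite pw3_r; auto; try lra; unfold c1, P0; simpl; ring. Qed.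
Lemma Sm1_out t : t <= 0 \/ 1 <= t -> Sm1 t = 0.
Proof. intros [H|H]; unfold Sm1; [rewrite pw3_l|rewrite pw3_r]; auto; try lra; unfold c0, P1; simpl; ring. Qed.
Lemma Sm2_out t : t <= 0 \/ 1 <= t -> Sm2 t = 0.
Proof. intros [H|H]; unfold Sm2; [rewrite pw3_l|rewrite pw3_r]; auto; try lra; unfold c0, P2; simpl; ring. Qed.
Lemma Sm3_out t : t <= 0 \/ 1 <= t -> Sm3 t = 0.
Proof. intros [H|H]; unfold Sm3; [rewrite pw3_l|rewrite pw3_r]; auto; try lra; unfold c0, P3; simpl; ring. Qed.
Lemma Sig_le0 t : t <= 0 -> Sig t = 0.  Proof. intros; unfold Sig; rewrite pw3_l; auto; lra. Qed.
Lemma Sig_ge1 t : 1 <= t -> Sig t = t - 1/2.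
Proof. intros; unfold Sig; rewrite pw3_r; auto; try lra; unfold Qp; simpl; field. Qed.

Lemma cont3_const c : continuous3 (fun _ _ _ => c).
Proof. intros x y t eps He. exists 1. split; [lra|]. intros. rewrite Rminus_diag, Rabs_R0; lra. Qed.

Lemma cont_eps (p : R -> R) x eps : continuity p -> 0 < eps ->
  exists d, 0 < d /\ forall x', Rabs (x' - x) < d -> Rabs (p x' - p x) < eps.
Proof.
  intros Hp He. destruct (Hp x eps He) as [d [Hd H]]. exists d. split; auto.
  intros x' Hx'. destruct (Req_dec x' x) as [->|Hne].
  { rewrite Rminus_diag, Rabs_R0; lra. }
  apply (H x'). split; [split; [exact I| auto]|exact Hx'].
Qed.

Lemma cont3_x (p : R -> R) : continuity p -> continuous3 (fun x _ _ => p x).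
Proof. intros Hp x y t eps He. destruct (cont_eps p x eps Hp He) as [d [Hd H]].
  exists d; split; auto. Qed.
Lemma cont3_y (p : R -> R) : continuity p -> continuous3 (fun _ y _ => p y).
Proof. intros Hp x y t eps He. destruct (cont_eps p y eps Hp He) as [d [Hd H]].
  exists d; split; auto. Qed.
Lemma cont3_t (p : R -> R) : continuity p -> continuous3 (fun _ _ t => p t).
Proof. intros Hp x y t eps He. destruct (cont_eps p t eps Hp He) as [d [Hd H]].
  exists d; split; auto. Qed.

Lemma cont3_plus F G : continuous3 F -> continuous3 G -> continuous3 (fun x y t => F x y t + G x y t).
Proof.
  intros HF HG x y t eps He.
  destruct (HF x y t (eps/2)) as [d1 [Hd1 H1]]; [lra|].
  destruct (HG x y t (eps/2)) as [d2 [Hd2 H2]]; [lra|].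
  exists (Rmin d1 d2). split; [apply Rmin_pos; auto|].
  intros x' y' t' Hx Hy Ht.
  pose proof (Rmin_l d1 d2); pose proof (Rmin_r d1 d2).
  specialize (H1 x' y' t' ltac:(lra) ltac:(lra) ltac:(lra)).
  specialize (H2 x' y' t' ltac:(lra) ltac:(lra) ltac:(lra)).
  replace (F x' y' t' + G x' y' t' - (F x y t + G x y t)) with
    ((F x' y' t' - F x y t) + (G x' y' t' - G x y t)) by ring.
  eapply Rle_lt_trans; [apply Rabs_triang|]. lra.
Qed.

Lemma cont3_mult F G : continuous3 F -> continuous3 G -> continuous3 (fun x y t => F x y t * G x y t).
Proof.
  intros HF HG x y t eps He.
  set (M := Rabs (F x y t) + Rabs (G x y t) + 1).
  assert (HM : 1 <= M) by (unfold M; pose proof (Rabs_pos (F x y t)); pose proof (Rabs_pos (G x y t)); lra).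
  set (e1 := Rmin 1 (eps / (2 * M))).
  assert (He1 : 0 < e1) by (apply Rmin_pos; [lra| apply Rdiv_lt_0_compat; lra]).
  assert (He1' : e1 <= 1) by apply Rmin_l.
  assert (He1'' : e1 * M <= eps / 2).
  { assert (e1 <= eps / (2*M)) by apply Rmin_r.
    apply Rmult_le_compat_r with (r := M) in H; [|lra].
    replace (eps / (2*M) * M) with (eps/2) in H by (field; lra). lra. }
  destruct (HF x y t e1) as [d1 [Hd1 H1]]; [lra|].
  destruct (HG x y t e1) as [d2 [Hd2 H2]]; [lra|].
  exists (Rmin d1 d2). split; [apply Rmin_pos; auto|].
  intros x' y' t' Hx Hy Ht.
  pose proof (Rmin_l d1 d2); pose proof (Rmin_r d1 d2).
  specialize (H1 x' y' t' ltac:(lra) ltac:(lra) ltac:(lra)).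
  specialize (H2 x' y' t' ltac:(lra) ltac:(lra) ltac:(lra)).
  replace (F x' y' t' * G x' y' t' - F x y t * G x y t) with
    ((F x' y' t' - F x y t) * (G x' y' t' - G x y t) + (F x' y' t' - F x y t) * G x y t
      + F x y t * (G x' y' t' - G x y t)) by ring.
  eapply Rle_lt_trans; [apply Rabs_triang|].
  eapply Rle_lt_trans; [apply Rplus_le_compat_r; apply Rabs_triang|].
  rewrite !Rabs_mult.
  pose proof (Rabs_pos (F x' y' t' - F x y t)); pose proof (Rabs_pos (G x' y' t' - G x y t)).
  pose proof (Rabs_pos (F x y t)); pose proof (Rabs_pos (G x y t)).
  assert (Rabs (F x' y' t' - F x y t) * Rabs (G x' y' t' - G x y t) <= e1 * e1) by
    (apply Rmult_le_compat; lra).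
  assert (Rabs (F x' y' t' - F x y t) * Rabs (G x y t) <= e1 * Rabs (G x y t)) by
    (apply Rmult_le_compat_r; lra).
  assert (Rabs (F x y t) * Rabs (G x' y' t' - G x y t) <= Rabs (F x y t) * e1) by
    (apply Rmult_le_compat_l; lra).
  assert (e1 * e1 <= e1) by nra.
  assert (e1 + e1 * Rabs (G x y t) + Rabs (F x y t) * e1 = e1 * M) by (unfold M; ring).
  lra.
Qed.

Definition sep (p q r : R -> R) : fun3 := fun x y t => p x * q y * r t.
Definition D1 (p p' : R -> R) := (forall t, is_derive p t (p' t)) /\ continuity p'.

Lemma D1_cont p p' : D1 p p' -> continuity p.
Proof. intros [H _] t. apply derivable_continuous_pt. apply ex_derive_Reals_0. eexists; apply H. Qed.

Lemma cont3_sep p q r : continuity p -> continuity q -> continuity r -> continuous3 (sep p q r).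
Proof. intros. unfold sep. apply cont3_mult; [apply cont3_mult|]. apply cont3_x; auto.
  apply cont3_y; auto. apply cont3_t; auto. Qed.

Ltac ext3 := apply functional_extensionality; intro; apply functional_extensionality; intro;
  apply functional_extensionality; intro.

Lemma dx_sep (p p' q r : R -> R) : (forall t, is_derive p t (p' t)) -> dx (sep p q r) = sep p' q r.
Proof. intros H. unfold dx, sep. ext3. apply is_derive_unique.
  rewrite <- (is_derive_unique _ _ _ (H x)). change (Derive p x) with (Derive (fun z => p z) x). auto_derive. eexists; apply H. simpl; ring. Qed.
Lemma dy_sep (p q q' r : R -> R) : (forall t, is_derive q t (q' t)) -> dy (sep p q r) = sep p q' r.
Proof. intros H. unfold dy, sep. ext3. apply is_derive_unique.
  rewrite <- (is_derive_unique _ _ _ (H x0)). change (Derive q x0) with (Derive (fun z => q z) x0). auto_derive. eexists; apply H. simpl; ring. Qed.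
Lemma dt_sep (p q r r' : R -> R) : (forall t, is_derive r t (r' t)) -> dt (sep p q r) = sep p q r'.
Proof. intros H. unfold dt, sep. ext3. apply is_derive_unique.
  rewrite <- (is_derive_unique _ _ _ (H x1)). change (Derive r x1) with (Derive (fun z => r z) x1). auto_derive. eexists; apply H. simpl; ring. Qed.

Lemma C1_3_sep p p' q q' r r' : D1 p p' -> D1 q q' -> D1 r r' -> C1_3 (sep p q r).
Proof.
  intros Hp Hq Hr. pose proof (D1_cont _ _ Hp). pose proof (D1_cont _ _ Hq). pose proof (D1_cont _ _ Hr).
  destruct Hp as [Hp Hp']; destruct Hq as [Hq Hq']; destruct Hr as [Hr Hr'].
  split; [apply cont3_sep; auto|]. split.
  - intros x y t. unfold sep. split; [|split].
    + apply ex_derive_mult; [apply ex_derive_mult; [eexists; apply Hp|apply ex_derive_const]|apply ex_derive_const].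
    + apply ex_derive_mult; [apply ex_derive_mult; [apply ex_derive_const|eexists; apply Hq]|apply ex_derive_const].
    + apply ex_derive_mult; [apply ex_derive_const|eexists; apply Hr].
  - rewrite (dx_sep p p'), (dy_sep p q q'), (dt_sep p q r r'); auto.
    split; [|split]; apply cont3_sep; auto.
Qed.

Definition add3 (F G : fun3) : fun3 := fun x y t => F x y t + G x y t.

Lemma dx_add F G : (forall x y t, ex_derive (fun s => F s y t) x) -> (forall x y t, ex_derive (fun s => G s y t) x) ->
  dx (add3 F G) = add3 (dx F) (dx G).
Proof. intros. unfold dx, add3. ext3. apply Derive_plus; auto. Qed.
Lemma dy_add F G : (forall x y t, ex_derive (fun s => F x s t) y) -> (forall x y t, ex_derive (fun s => G x s t) y) ->
  dy (add3 F G) = add3 (dy F) (dy G).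
Proof. intros. unfold dy, add3. ext3. apply Derive_plus; auto. Qed.
Lemma dt_add F G : (forall x y t, ex_derive (fun s => F x y s) t) -> (forall x y t, ex_derive (fun s => G x y s) t) ->
  dt (add3 F G) = add3 (dt F) (dt G).
Proof. intros. unfold dt, add3. ext3. apply Derive_plus; auto. Qed.

Lemma C1_3_add F G : C1_3 F -> C1_3 G -> C1_3 (add3 F G).
Proof.
  intros [HF [HdF [HF1 [HF2 HF3]]]] [HG [HdG [HG1 [HG2 HG3]]]].
  split; [apply cont3_plus; auto|]. split.
  - intros x y t. destruct (HdF x y t) as [? [? ?]]. destruct (HdG x y t) as [? [? ?]].
    unfold add3. split; [|split].
    apply (ex_derive_plus (fun s => F s y t) (fun s => G s y t)); auto.
    apply (ex_derive_plus (fun s => F x s t) (fun s => G x s t)); auto.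
    apply (ex_derive_plus (fun s => F x y s) (fun s => G x y s)); auto.
  - rewrite dx_add, dy_add, dt_add;
      try (intros x y t; exact (proj1 (HdF x y t)));
      try (intros x y t; exact (proj1 (proj2 (HdF x y t))));
      try (intros x y t; exact (proj2 (proj2 (HdF x y t))));
      try (intros x y t; exact (proj1 (HdG x y t)));
      try (intros x y t; exact (proj1 (proj2 (HdG x y t))));
      try (intros x y t; exact (proj2 (proj2 (HdG x y t)))).
    split; [|split]; apply cont3_plus; auto.
Qed.

Lemma is_derive_scaled (p p' : R -> R) a w t : w <> 0 ->
  (forall u, is_derive p u (p' u)) -> is_derive (fun s => p ((s - a)/w)) t (p' ((t-a)/w) / w).
Proof.
  intros Hw Hp. rewrite <- (is_derive_unique _ _ _ (Hp ((t-a)/w))).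
  change (Derive p ((t-a)/w)) with (Derive (fun z => p z) ((t-a)/w)).
  auto_derive. eexists; apply Hp. unfold Rminus, Rdiv; simpl; ring.
Qed.

Definition St a w t := Sm ((t - a)/w).
Definition St1 a w t := Sm1 ((t - a)/w) / w.
Definition St2 a w t := Sm2 ((t - a)/w) / w^2.
Definition St3 a w t := Sm3 ((t - a)/w) / w^3.

Lemma d_St a w t : w <> 0 -> is_derive (St a w) t (St1 a w t).
Proof. intros. apply (is_derive_scaled Sm Sm1); auto. apply d_Sm. Qed.
Lemma DSm u : Derive (fun x => Sm x) u = Sm1 u.
Proof. apply is_derive_unique, d_Sm. Qed.
Lemma DSm1 u : Derive (fun x => Sm1 x) u = Sm2 u.
Proof. apply is_derive_unique, d_Sm1. Qed.
Lemma DSm2 u : Derive (fun x => Sm2 x) u = Sm3 u.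
Proof. apply is_derive_unique, d_Sm2. Qed.
Lemma ESm u : ex_derive (fun x => Sm x) u. Proof. eexists; apply d_Sm. Qed.
Lemma ESm1 u : ex_derive (fun x => Sm1 x) u. Proof. eexists; apply d_Sm1. Qed.
Lemma ESm2 u : ex_derive (fun x => Sm2 x) u. Proof. eexists; apply d_Sm2. Qed.

Lemma d_St1 a w t : w <> 0 -> is_derive (St1 a w) t (St2 a w t).
Proof. intros. unfold St1, St2. auto_derive; [apply ESm1|].
  rewrite DSm1. unfold Rminus, Rdiv. simpl. field. auto. Qed.
Lemma d_St2 a w t : w <> 0 -> is_derive (St2 a w) t (St3 a w t).
Proof. intros. unfold St2, St3. auto_derive; [apply ESm2|].
  rewrite DSm2. unfold Rminus, Rdiv. simpl. field. auto. Qed.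
Lemma cont_St3 a w : w <> 0 -> continuity (St3 a w).
Proof. intros Hw t. unfold St3. apply continuity_pt_div. 
  apply (continuity_pt_comp (fun s => (s - a)/w) Sm3). 
  apply derivable_continuous_pt. apply ex_derive_Reals_0. auto_derive. auto.
  apply cont_Sm3. apply continuity_pt_const. intros ? ?; auto. apply pow_nonzero; auto. Qed.

Lemma DSt a w u : w <> 0 -> Derive (fun x => St a w x) u = St1 a w u.
Proof. intros; apply is_derive_unique, d_St; auto. Qed.
Lemma DSt1 a w u : w <> 0 -> Derive (fun x => St1 a w x) u = St2 a w u.
Proof. intros; apply is_derive_unique, d_St1; auto. Qed.
Lemma DSt2 a w u : w <> 0 -> Derive (fun x => St2 a w x) u = St3 a w u.
Proof. intros; apply is_derive_unique, d_St2; auto. Qed.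
Lemma ESt a w u : w <> 0 -> ex_derive (fun x => St a w x) u.
Proof. intros; eexists; apply d_St; auto. Qed.
Lemma ESt1 a w u : w <> 0 -> ex_derive (fun x => St1 a w x) u.
Proof. intros; eexists; apply d_St1; auto. Qed.
Lemma ESt2 a w u : w <> 0 -> ex_derive (fun x => St2 a w x) u.
Proof. intros; eexists; apply d_St2; auto. Qed.

Lemma d_Sig_sc u : is_derive (fun t => (4/10) * Sig ((t - 8/10)/(4/10))) u (St (8/10) (4/10) u).
Proof. unfold St. pose proof (is_derive_scaled Sig Sm (8/10) (4/10) u ltac:(lra) d_Sig).
  replace (Sm ((u - 8/10)/(4/10))) with ((4/10) * (Sm ((u - 8 / 10) / (4 / 10)) / (4 / 10))) by (field).
  apply is_derive_scal; auto. Qed.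

Ltac toR := match goal with |- @eq _ ?a ?b => change (@eq R a b) end.
Ltac dsimp := repeat first [rewrite DSt by lra | rewrite DSt1 by lra | rewrite DSt2 by lra].
Ltac dside := repeat first [ split | apply ESt; lra | apply ESt1; lra | apply ESt2; lra | exact I].

Definition epsv kk kp := exp (- kk / 2 + kp / 6).
Definition SK := St (65/100) (1/10).
Definition SK1 := St1 (65/100) (1/10).
Definition SK2 := St2 (65/100) (1/10).
Definition SK3 := St3 (65/100) (1/10).
Definition SA := St (6/100) (1/100).
Definition SA1 := St1 (6/100) (1/100).
Definition SA2 := St2 (6/100) (1/100).
Definition SA3 := St3 (6/100) (1/100).
Definition S0 := St (1/100) (45/1000).
Definition S01 := St1 (1/100) (45/1000).
Definition SW := St (8/10) (4/10).
Definition SW1 := St1 (8/10) (4/10).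
Definition SW2 := St2 (8/10) (4/10).

Definition SigS t := (4/10) * Sig ((t - 8/10)/(4/10)).
Definition Hf t := t / 3 + 2/3 * SigS t.
Definition HH1 t := 1/3 + 2/3 * SW t.
Definition HH2 t := 2/3 * SW1 t.
Definition HH3 t := 2/3 * SW2 t.

Definition ff kk t := exp (- kk * t) * (1 - SK t).
Definition ff1 kk t := exp (- kk * t) * (- kk * (1 - SK t) - SK1 t).
Definition ff2 kk t := exp (- kk * t) * (kk^2 * (1 - SK t) + 2 * kk * SK1 t - SK2 t).
Definition gg kk kp t := epsv kk kp * SA t * exp (- kp * Hf t).
Definition gg1 kk kp t := epsv kk kp * exp (- kp * Hf t) * (SA1 t - kp * HH1 t * SA t).
Definition gg2 kk kp t := epsv kk kp * exp (- kp * Hf t) *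
  (SA2 t - 2 * kp * HH1 t * SA1 t - kp * HH2 t * SA t + kp^2 * HH1 t ^ 2 * SA t).
Definition bb kp t := 1 - 8/9 * S0 t + HH1 t ^ 2 - 1/9 - HH2 t / kp.
Definition bb1 kp t := - 8/9 * S01 t + 2 * HH1 t * HH2 t - HH3 t / kp.
Definition RR1 kk kp t := epsv kk kp / kk * exp ((kk - kp/3) * t) * (2 * kp / 3 * SA1 t - SA2 t).
Definition RR1' kk kp t := epsv kk kp / kk * exp ((kk - kp/3) * t) *
  ((kk - kp/3) * (2 * kp / 3 * SA1 t - SA2 t) + 2 * kp / 3 * SA2 t - SA3 t).
Definition RR2 kk kp t := / (epsv kk kp * kp) * exp (- (kk - kp/3) * t) * (SK2 t - 2 * kk * SK1 t).
Definition RR2' kk kp t := / (epsv kk kp * kp) * exp (- (kk - kp/3) * t) *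
  (- (kk - kp/3) * (SK2 t - 2 * kk * SK1 t) + SK3 t - 2 * kk * SK2 t).

Lemma DSigS u : Derive (fun x => SigS x) u = SW u.
Proof. apply is_derive_unique, d_Sig_sc. Qed.
Lemma ESigS u : ex_derive (fun x => SigS x) u.
Proof. eexists; apply d_Sig_sc. Qed.

Lemma d_Hf t : is_derive Hf t (HH1 t).
Proof. unfold Hf, HH1. auto_derive. apply ESigS. rewrite DSigS. toR. field. Qed.
Lemma DHf u : Derive (fun x => Hf x) u = HH1 u.
Proof. apply is_derive_unique, d_Hf. Qed.
Lemma EHf u : ex_derive (fun x => Hf x) u.
Proof. eexists; apply d_Hf. Qed.
Lemma DSK u : Derive (fun x => SK x) u = SK1 u.
Proof. unfold SK, SK1; apply DSt; lra. Qed.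
Lemma ESK u : ex_derive (fun x => SK x) u.
Proof. unfold SK; apply ESt; lra. Qed.
Lemma DSK1 u : Derive (fun x => SK1 x) u = SK2 u.
Proof. unfold SK1, SK2; apply DSt1; lra. Qed.
Lemma ESK1 u : ex_derive (fun x => SK1 x) u.
Proof. unfold SK1; apply ESt1; lra. Qed.
Lemma DSK2 u : Derive (fun x => SK2 x) u = SK3 u.
Proof. unfold SK2, SK3; apply DSt2; lra. Qed.
Lemma ESK2 u : ex_derive (fun x => SK2 x) u.
Proof. unfold SK2; apply ESt2; lra. Qed.
Lemma DSA u : Derive (fun x => SA x) u = SA1 u.
Proof. unfold SA, SA1; apply DSt; lra. Qed.
Lemma ESA u : ex_derive (fun x => SA x) u.
Proof. unfold SA; apply ESt; lra. Qed.
Lemma DSA1 u : Derive (fun x => SA1 x) u = SA2 u.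
Proof. unfold SA1, SA2; apply DSt1; lra. Qed.
Lemma ESA1 u : ex_derive (fun x => SA1 x) u.
Proof. unfold SA1; apply ESt1; lra. Qed.
Lemma DSA2 u : Derive (fun x => SA2 x) u = SA3 u.
Proof. unfold SA2, SA3; apply DSt2; lra. Qed.
Lemma ESA2 u : ex_derive (fun x => SA2 x) u.
Proof. unfold SA2; apply ESt2; lra. Qed.
Lemma DS0 u : Derive (fun x => S0 x) u = S01 u.
Proof. unfold S0, S01; apply DSt; lra. Qed.
Lemma ES0 u : ex_derive (fun x => S0 x) u.
Proof. unfold S0; apply ESt; lra. Qed.
Lemma DSW u : Derive (fun x => SW x) u = SW1 u.
Proof. unfold SW, SW1; apply DSt; lra. Qed.
Lemma ESW u : ex_derive (fun x => SW x) u.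
Proof. unfold SW; apply ESt; lra. Qed.
Lemma DSW1 u : Derive (fun x => SW1 x) u = SW2 u.
Proof. unfold SW1, SW2; apply DSt1; lra. Qed.
Lemma ESW1 u : ex_derive (fun x => SW1 x) u.
Proof. unfold SW1; apply ESt1; lra. Qed.

Lemma d_H1 t : is_derive HH1 t (HH2 t).
Proof. unfold HH1, HH2. auto_derive. apply ESW. rewrite DSW. toR. field. Qed.
Lemma d_H2 t : is_derive HH2 t (HH3 t).
Proof. unfold HH2, HH3. auto_derive. apply ESW1. rewrite DSW1. toR. field. Qed.
Lemma DH1 u : Derive (fun x => HH1 x) u = HH2 u.
Proof. apply is_derive_unique, d_H1. Qed.
Lemma EH1 u : ex_derive (fun x => HH1 x) u.
Proof. eexists; apply d_H1. Qed.
Lemma DH2 u : Derive (fun x => HH2 x) u = HH3 u.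
Proof. apply is_derive_unique, d_H2. Qed.
Lemma EH2 u : ex_derive (fun x => HH2 x) u.
Proof. eexists; apply d_H2. Qed.

Lemma ES01 u : ex_derive (fun x => S01 x) u.
Proof. unfold S01; apply ESt1; lra. Qed.
Lemma ESW2 u : ex_derive (fun x => SW2 x) u.
Proof. unfold SW2; apply ESt2; lra. Qed.

Ltac dall := repeat first [rewrite DSK | rewrite DSK1 | rewrite DSK2 | rewrite DSA | rewrite DSA1 | rewrite DSA2
  | rewrite DS0 | rewrite DSW | rewrite DSW1 | rewrite DHf | rewrite DH1 | rewrite DH2].
Ltac eall := repeat first [ apply ESK | apply ESK1 | apply ESK2 | apply ESA | apply ESA1 | apply ESA2
  | apply ES0 | apply ESW | apply ESW1 | apply ES01 | apply ESW2 | apply EHf | apply EH1 | apply EH2 | exact I | match goal with |- _ /\ _ => split end ].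

Lemma d_ff kk t : is_derive (ff kk) t (ff1 kk t).
Proof. unfold ff, ff1. auto_derive; eall. dall. toR. ring. Qed.
Lemma d_ff1 kk t : is_derive (ff1 kk) t (ff2 kk t).
Proof. unfold ff1, ff2. auto_derive; eall. dall. toR. ring. Qed.
Lemma d_gg kk kp t : is_derive (gg kk kp) t (gg1 kk kp t).
Proof. unfold gg, gg1. auto_derive; eall. dall. toR. ring. Qed.
Lemma d_gg1 kk kp t : is_derive (gg1 kk kp) t (gg2 kk kp t).
Proof. unfold gg1, gg2. auto_derive; eall. dall. toR. ring. Qed.
Lemma d_bb kp t : kp <> 0 -> is_derive (bb kp) t (bb1 kp t).
Proof. intros. unfold bb, bb1. auto_derive; eall. dall. toR. field. auto. Qed.
Lemma d_RR1 kk kp t : kk <> 0 -> is_derive (RR1 kk kp) t (RR1' kk kp t).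
Proof. intros. unfold RR1, RR1'. auto_derive; eall. dall. toR. field. auto. Qed.
Lemma d_RR2 kk kp t : kp <> 0 -> is_derive (RR2 kk kp) t (RR2' kk kp t).
Proof. intros. unfold RR2, RR2'. auto_derive; eall. dall. toR. field.
  split; auto. unfold epsv. apply Rgt_not_eq, exp_pos. Qed.

Lemma exd_cont (f : R -> R) t : ex_derive f t -> continuity_pt f t.
Proof. intros. apply derivable_continuous_pt. apply ex_derive_Reals_0. auto. Qed.

Lemma cont_ff2 kk : continuity (ff2 kk).
Proof. apply cont_poly_gen. intro. unfold ff2. auto_derive; eall. Qed.
Lemma cont_gg2 kk kp : continuity (gg2 kk kp).
Proof. apply cont_poly_gen. intro. unfold gg2. auto_derive; eall. Qed.
Lemma cont_bb1 kp : continuity (bb1 kp).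
Proof. apply cont_poly_gen. intro. unfold bb1, HH3. auto_derive; eall. Qed.
Lemma cont_SA3 : continuity SA3.
Proof. apply cont_St3; lra. Qed.
Lemma cont_SK3 : continuity SK3.
Proof. apply cont_St3; lra. Qed.
Lemma cont_RR1' kk kp : continuity (RR1' kk kp).
Proof. intro t. unfold RR1'. apply continuity_pt_mult.
  apply exd_cont. auto_derive. auto.
  apply continuity_pt_minus. apply exd_cont. auto_derive; eall. apply cont_SA3. Qed.
Lemma cont_RR2' kk kp : continuity (RR2' kk kp).
Proof. intro t. unfold RR2'. apply continuity_pt_mult.
  apply exd_cont. auto_derive. auto.
  apply continuity_pt_minus. apply continuity_pt_plus. apply exd_cont. auto_derive; eall. apply cont_SK3.
  apply exd_cont. auto_derive; eall. Qed.

Lemma St_lo a w t : 0 < w -> t <= a -> St a w t = 0.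
Proof. intros. unfold St. apply Sm_le0. apply Rmult_le_0_r; [lra|]. apply Rlt_le, Rinv_0_lt_compat; lra. Qed.
Lemma St_hi a w t : 0 < w -> a + w <= t -> St a w t = 1.
Proof. intros. unfold St. apply Sm_ge1. apply Rmult_le_reg_r with w; auto.
  unfold Rdiv. rewrite Rmult_assoc, Rinv_l; lra. Qed.
Lemma St_out_arg a w t : 0 < w -> t <= a \/ a + w <= t -> (t - a)/w <= 0 \/ 1 <= (t-a)/w.
Proof. intros Hw [H|H]; [left|right].
  apply Rmult_le_0_r; [lra|]. apply Rlt_le, Rinv_0_lt_compat; lra.
  apply Rmult_le_reg_r with w; auto. unfold Rdiv. rewrite Rmult_assoc, Rinv_l; lra. Qed.
Lemma St1_out a w t : 0 < w -> t <= a \/ a + w <= t -> St1 a w t = 0.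
Proof. intros. unfold St1. rewrite Sm1_out. unfold Rdiv; ring. apply St_out_arg; auto. Qed.
Lemma St2_out a w t : 0 < w -> t <= a \/ a + w <= t -> St2 a w t = 0.
Proof. intros. unfold St2. rewrite Sm2_out. unfold Rdiv; ring. apply St_out_arg; auto. Qed.
Lemma St3_out a w t : 0 < w -> t <= a \/ a + w <= t -> St3 a w t = 0.
Proof. intros. unfold St3. rewrite Sm3_out. unfold Rdiv; ring. apply St_out_arg; auto. Qed.

Lemma Hf_lo t : t <= 8/10 -> Hf t = t/3.
Proof. intros. unfold Hf, SigS. rewrite Sig_le0. ring.
  apply Rmult_le_0_r; [lra|]. apply Rlt_le, Rinv_0_lt_compat; lra. Qed.
Lemma Hf_hi t : 12/10 <= t -> Hf t = t - 2/3.
Proof. intros. unfold Hf, SigS. rewrite Sig_ge1. field.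
  apply Rmult_le_reg_r with (4/10); [lra|]. unfold Rdiv. rewrite Rmult_assoc, Rinv_l; lra. Qed.

Lemma epsv_pos kk kp : 0 < epsv kk kp.
Proof. apply exp_pos. Qed.

Lemma I1 kk kp t : kp <> 0 -> ff2 kk t = kk^2 * ff kk t - RR2 kk kp t * kp * gg kk kp t.
Proof.
  intros Hkp. pose proof (epsv_pos kk kp).
  destruct (Rle_lt_dec t (65/100)) as [Ht|Ht]; [|destruct (Rle_lt_dec (75/100) t) as [Ht'|Ht']].
  - unfold ff2, ff, RR2, SK1, SK2. rewrite St1_out, St2_out by lra. ring.
  - unfold ff2, ff, RR2, SK1, SK2. rewrite St1_out, St2_out by lra. ring.
  - unfold ff2, ff, RR2, gg, SA. rewrite St_hi by lra. rewrite Hf_lo by lra.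
    replace (exp (- kk * t)) with (exp (- (kk - kp/3) * t) * exp (- kp * (t/3))).
    field. split; lra. rewrite <- exp_plus. f_equal. field.
Qed.

Lemma I2 kk kp t : kk <> 0 -> kp <> 0 -> gg2 kk kp t = bb kp t * kp^2 * gg kk kp t - RR1 kk kp t * kk * ff kk t.
Proof.
  intros Hkk Hkp. pose proof (epsv_pos kk kp).
  destruct (Rle_lt_dec t (6/100)) as [Ht|Ht]; [|destruct (Rle_lt_dec (7/100) t) as [Ht'|Ht']].
  - unfold gg2, gg, bb, RR1, SA, SA1, SA2. rewrite St_lo, St1_out, St2_out by lra. field; auto.
  - unfold gg2, gg, bb, RR1, SA, SA1, SA2, S0. rewrite St1_out, St2_out by lra.
    rewrite (St_hi (1/100)) by lra. field; auto.
  - unfold gg2, gg, bb, RR1, ff, HH1, HH2, SW, SW1, SK, S0.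
    rewrite (St_hi (1/100)) by lra. rewrite (St_lo (65/100)) by lra.
    rewrite (St_lo (8/10)) by lra. rewrite St1_out by lra. rewrite Hf_lo by lra.
    replace (exp (- kp * (t/3))) with (exp ((kk - kp/3) * t) * exp (- kk * t)).
    field; auto. rewrite <- exp_plus. f_equal. field.
Qed.

Lemma exp_le x y : x <= y -> exp x <= exp y.
Proof. intros [H|H]. apply Rlt_le, exp_increasing; auto. subst; lra. Qed.

Lemma exp_neg_bound x : 0 < x -> exp (- x) <= 1 / x.
Proof. intros. rewrite exp_Ropp. pose proof (exp_ineq1_le x).
  unfold Rdiv. rewrite Rmult_1_l. apply Rinv_le_contravar; lra. Qed.

Lemma abs_mul_le a b A B : Rabs a <= A -> Rabs b <= B -> Rabs (a * b) <= A * B.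
Proof. intros. rewrite Rabs_mult. apply Rmult_le_compat; auto; apply Rabs_pos. Qed.

Lemma abs_sub_le a b : Rabs (a - b) <= Rabs a + Rabs b.
Proof. unfold Rminus. eapply Rle_trans; [apply Rabs_triang|]. rewrite Rabs_Ropp. lra. Qed.

Lemma St_bnd a w t : 0 <= St a w t <= 1.
Proof. apply Sm_bnd. Qed.
Lemma St1_bnd a w t : 0 < w -> Rabs (St1 a w t) <= (35/16)/w.
Proof. intros. unfold St1. unfold Rdiv. rewrite Rabs_mult. rewrite (Rabs_right (/w)).
  apply Rmult_le_compat_r. apply Rlt_le, Rinv_0_lt_compat; auto.
  pose proof (Sm1_bnd ((t-a)*/w)). rewrite Rabs_right; lra.
  apply Rle_ge, Rlt_le, Rinv_0_lt_compat; auto. Qed.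
Lemma St2_bnd a w t : 0 < w -> Rabs (St2 a w t) <= 27/w^2.
Proof. intros. unfold St2. unfold Rdiv. rewrite Rabs_mult. rewrite (Rabs_right (/w^2)).
  apply Rmult_le_compat_r. apply Rlt_le, Rinv_0_lt_compat, pow_lt; auto.
  apply Sm2_bnd.
  apply Rle_ge, Rlt_le, Rinv_0_lt_compat, pow_lt; auto. Qed.
Lemma St3_bnd a w t : 0 < w -> Rabs (St3 a w t) <= 210/w^3.
Proof. intros. unfold St3. unfold Rdiv. rewrite Rabs_mult. rewrite (Rabs_right (/w^3)).
  apply Rmult_le_compat_r. apply Rlt_le, Rinv_0_lt_compat, pow_lt; auto.
  apply Sm3_bnd.
  apply Rle_ge, Rlt_le, Rinv_0_lt_compat, pow_lt; auto. Qed.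

Lemma SA1_b t : Rabs (SA1 t) <= 21875/100. Proof. unfold SA1. eapply Rle_trans. apply St1_bnd; lra. lra. Qed.
Lemma SA2_b t : Rabs (SA2 t) <= 270000. Proof. unfold SA2. eapply Rle_trans. apply St2_bnd; lra. simpl; lra. Qed.
Lemma SA3_b t : Rabs (SA3 t) <= 210000000. Proof. unfold SA3. eapply Rle_trans. apply St3_bnd; lra. simpl; lra. Qed.
Lemma SK1_b t : Rabs (SK1 t) <= 21875/1000. Proof. unfold SK1. eapply Rle_trans. apply St1_bnd; lra. lra. Qed.
Lemma SK2_b t : Rabs (SK2 t) <= 2700. Proof. unfold SK2. eapply Rle_trans. apply St2_bnd; lra. simpl; lra. Qed.
Lemma SK3_b t : Rabs (SK3 t) <= 210000. Proof. unfold SK3. eapply Rle_trans. apply St3_bnd; lra. simpl; lra. Qed.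
Lemma S01_b t : Rabs (S01 t) <= 4862/100. Proof. unfold S01. eapply Rle_trans. apply St1_bnd; lra. lra. Qed.
Lemma SW1_b t : Rabs (SW1 t) <= 547/100. Proof. unfold SW1. eapply Rle_trans. apply St1_bnd; lra. lra. Qed.
Lemma SW2_b t : Rabs (SW2 t) <= 16875/100. Proof. unfold SW2. eapply Rle_trans. apply St2_bnd; lra. simpl; lra. Qed.

Definition hyp kk kp := 1000000 <= kk /\ kk < kp /\ kp <= 2 * kk.

Lemma RR1_bnd kk kp t : hyp kk kp -> Rabs (RR1 kk kp t) <= 1 /\ Rabs (RR1' kk kp t) <= kk.
Proof.
  intros [Hk [Hkp Hkp2]].
  destruct (Rle_lt_dec t (6/100)) as [Ht|Ht]; [|destruct (Rle_lt_dec (7/100) t) as [Ht'|Ht']].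
  1,2: unfold RR1, RR1', SA1, SA2, SA3; rewrite St1_out, St2_out, St3_out by lra;
     split; match goal with |- Rabs ?e <= _ => replace e with 0 by ring end; rewrite Rabs_R0; lra.
  set (E := epsv kk kp * exp ((kk - kp/3) * t)).
  assert (HE : 0 <= E <= 10 / kk).
  { unfold E, epsv. rewrite <- exp_plus. split. apply Rlt_le, exp_pos.
    eapply Rle_trans; [apply exp_le|]. 2: { replace (10/kk) with (1 / (kk/10)) by (field; lra).
      apply exp_neg_bound. lra. }
    nra. }
  assert (HX : Rabs (2 * kp / 3 * SA1 t - SA2 t) <= 292 * kk).
  { pose proof (SA1_b t); pose proof (SA2_b t).
    assert (Rabs (2 * kp / 3 * SA1 t) <= 2 * kp / 3 * (21875/100)).
    { rewrite Rabs_mult. rewrite (Rabs_right (2*kp/3)) by lra. apply Rmult_le_compat_l; lra. }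
    eapply Rle_trans; [apply abs_sub_le|]. lra. }
  assert (HY : Rabs ((kk - kp/3) * (2 * kp / 3 * SA1 t - SA2 t) + 2 * kp / 3 * SA2 t - SA3 t) <= 293 * kk^2).
  { pose proof (SA3_b t); pose proof (SA2_b t).
    assert (Rabs ((kk - kp/3) * (2 * kp / 3 * SA1 t - SA2 t)) <= kk * (292 * kk)).
    { apply abs_mul_le; auto. rewrite Rabs_right; lra. }
    assert (Rabs (2 * kp / 3 * SA2 t) <= 2 * kp / 3 * 270000).
    { rewrite Rabs_mult. rewrite (Rabs_right (2*kp/3)) by lra. apply Rmult_le_compat_l; lra. }
    eapply Rle_trans; [apply abs_sub_le|].
    eapply Rle_trans; [apply Rplus_le_compat_r; apply Rabs_triang|].
    assert (kk * kk >= 1000000 * kk) by nra. simpl. lra. }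
  unfold RR1, RR1'. fold E. 
  replace (epsv kk kp / kk * exp ((kk - kp / 3) * t)) with (E / kk) by (unfold E; field; lra).
  assert (Hk0 : 0 < kk) by lra.
  assert (HEk : Rabs (E / kk) <= 10 / kk^2).
  { rewrite Rabs_right. replace (10 / kk^2) with ((10/kk)/kk) by (field; lra).
    unfold Rdiv. apply Rmult_le_compat_r. apply Rlt_le, Rinv_0_lt_compat; lra. lra.
    apply Rle_ge. unfold Rdiv. apply Rmult_le_pos; [lra|]. apply Rlt_le, Rinv_0_lt_compat; lra. }
  split.
  - eapply Rle_trans. apply abs_mul_le; [apply HEk|apply HX].
    replace (10 / kk ^ 2 * (292 * kk)) with (2920 / kk) by (field; lra).
    apply Rmult_le_reg_r with kk; [lra|]. unfold Rdiv. rewrite Rmult_assoc, Rinv_l; lra.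
  - eapply Rle_trans. apply abs_mul_le; [apply HEk|apply HY].
    replace (10 / kk ^ 2 * (293 * kk^2)) with 2930 by (field; lra). lra.
Qed.

Lemma RR2_bnd kk kp t : hyp kk kp -> Rabs (RR2 kk kp t) <= 1 /\ Rabs (RR2' kk kp t) <= kk.
Proof.
  intros [Hk [Hkp Hkp2]].
  destruct (Rle_lt_dec t (65/100)) as [Ht|Ht]; [|destruct (Rle_lt_dec (75/100) t) as [Ht'|Ht']].
  1,2: unfold RR2, RR2', SK1, SK2, SK3; rewrite St1_out, St2_out, St3_out by lra;
     split; match goal with |- Rabs ?e <= _ => replace e with 0 by ring end; rewrite Rabs_R0; lra.
  pose proof (epsv_pos kk kp).
  set (E := / epsv kk kp * exp (- (kk - kp/3) * t)).
  assert (HE : 0 <= E <= 20 / kk).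
  { unfold E, epsv. rewrite <- exp_Ropp, <- exp_plus. split. apply Rlt_le, exp_pos.
    eapply Rle_trans; [apply exp_le|]. 2: { replace (20/kk) with (1 / (kk/20)) by (field; lra).
      apply exp_neg_bound. lra. }
    nra. }
  assert (HX : Rabs (SK2 t - 2 * kk * SK1 t) <= 44 * kk).
  { pose proof (SK1_b t); pose proof (SK2_b t).
    assert (Rabs (2 * kk * SK1 t) <= 2 * kk * (21875/1000)).
    { rewrite Rabs_mult. rewrite (Rabs_right (2*kk)) by lra. apply Rmult_le_compat_l; lra. }
    eapply Rle_trans; [apply abs_sub_le|]. lra. }
  assert (HY : Rabs (- (kk - kp/3) * (SK2 t - 2 * kk * SK1 t) + SK3 t - 2 * kk * SK2 t) <= 45 * kk^2).
  { pose proof (SK3_b t); pose proof (SK2_b t).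
    assert (Rabs (- (kk - kp/3) * (SK2 t - 2 * kk * SK1 t)) <= kk * (44 * kk)).
    { apply abs_mul_le; auto. rewrite Rabs_left1; lra. }
    assert (Rabs (2 * kk * SK2 t) <= 2 * kk * 2700).
    { rewrite Rabs_mult. rewrite (Rabs_right (2*kk)) by lra. apply Rmult_le_compat_l; lra. }
    eapply Rle_trans; [apply abs_sub_le|].
    eapply Rle_trans; [apply Rplus_le_compat_r; apply Rabs_triang|].
    assert (kk * kk >= 1000000 * kk) by nra. simpl. lra. }
  unfold RR2, RR2'.
  replace (/ (epsv kk kp * kp) * exp (- (kk - kp / 3) * t)) with (E / kp) by (unfold E; field; lra).
  assert (Hk0 : 0 < kk) by lra.
  assert (HEk : Rabs (E / kp) <= 20 / (kk * kp)).
  { rewrite Rabs_right. replace (20 / (kk * kp)) with ((20/kk)/kp) by (field; lra).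
    unfold Rdiv. apply Rmult_le_compat_r. apply Rlt_le, Rinv_0_lt_compat; lra. lra.
    apply Rle_ge. unfold Rdiv. apply Rmult_le_pos; [lra|]. apply Rlt_le, Rinv_0_lt_compat; lra. }
  split.
  - eapply Rle_trans. apply abs_mul_le; [apply HEk|apply HX].
    replace (20 / (kk * kp) * (44 * kk)) with (880 / kp) by (field; lra).
    apply Rmult_le_reg_r with kp; [lra|]. unfold Rdiv. rewrite Rmult_assoc, Rinv_l; lra.
  - eapply Rle_trans. apply abs_mul_le; [apply HEk|apply HY].
    replace (20 / (kk * kp) * (45 * kk^2)) with (900 * kk / kp) by (field; lra).
    apply Rmult_le_reg_r with kp; [lra|]. unfold Rdiv. rewrite Rmult_assoc, Rinv_l; nra.
Qed.

Lemma SW_b t : 0 <= SW t <= 1. Proof. apply St_bnd. Qed.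
Lemma SW1_nn t : 0 <= SW1 t <= 547/100.
Proof. unfold SW1, St1. pose proof (Sm1_bnd ((t - 8/10)/(4/10))). split.
  apply Rmult_le_pos; [lra|]. apply Rlt_le, Rinv_0_lt_compat; lra. 
  pose proof (St1_bnd (8/10) (4/10) t ltac:(lra)). pose proof (Rle_abs (St1 (8/10) (4/10) t)).
  unfold St1 in *. lra. Qed.
Lemma H1_b t : 1/3 <= HH1 t <= 1. Proof. unfold HH1. pose proof (SW_b t). lra. Qed.
Lemma H2_b t : 0 <= HH2 t <= 365/100. Proof. unfold HH2. pose proof (SW1_nn t). lra. Qed.
Lemma H3_b t : Rabs (HH3 t) <= 113. Proof. unfold HH3. rewrite Rabs_mult, Rabs_right by lra.
  pose proof (SW2_b t). lra. Qed.

Lemma bb_b kk kp t : hyp kk kp -> 1/10 <= bb kp t <= 2.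
Proof. intros [Hk [Hkp Hkp2]]. unfold bb. pose proof (St_bnd (1/100) (45/1000) t).
  pose proof (H1_b t) as HB1. pose proof (H2_b t) as HB2. fold S0 in H.
  assert (0 <= HH2 t / kp <= 1/100). { split. apply Rmult_le_pos; [lra|]. apply Rlt_le, Rinv_0_lt_compat; lra.
    apply Rmult_le_reg_r with kp; [lra|]. unfold Rdiv. rewrite Rmult_assoc, Rinv_l; lra. }
  nra. Qed.

Lemma bb1_b kk kp t : hyp kk kp -> Rabs (bb1 kp t) <= 44.
Proof. intros [Hk [Hkp Hkp2]]. unfold bb1.
  destruct (Rle_lt_dec t (8/10)).
  - unfold HH2, HH3, SW1, SW2. rewrite St1_out, St2_out by lra.
    replace (- 8 / 9 * S01 t + 2 * HH1 t * (2 / 3 * 0) - 2 / 3 * 0 / kp) with (-8/9 * S01 t) by (field; lra).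
    rewrite Rabs_mult. pose proof (S01_b t). rewrite Rabs_left by lra. lra.
  - unfold S01. rewrite St1_out by lra. pose proof (H1_b t) as HB1. pose proof (H2_b t) as HB2. pose proof (H3_b t) as HB3.
    assert (Rabs (HH3 t / kp) <= 1). { unfold Rdiv. rewrite Rabs_mult. rewrite (Rabs_right (/kp)).
      apply Rmult_le_reg_r with kp; [lra|]. rewrite Rmult_assoc, Rinv_l; nra.
      apply Rle_ge, Rlt_le, Rinv_0_lt_compat; lra. }
    replace (- 8 / 9 * 0 + 2 * HH1 t * HH2 t - HH3 t / kp) with (2 * HH1 t * HH2 t - HH3 t / kp) by ring.
    eapply Rle_trans; [apply abs_sub_le|]. rewrite Rabs_right; nra. Qed.

Lemma bb_lo kp t : kp <> 0 -> t <= 1/100 -> bb kp t = 1.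
Proof. intros. unfold bb, S0, HH1, HH2, SW, SW1. rewrite !St_lo, St1_out by lra. field. auto. Qed.

Lemma bb_hi kp t : kp <> 0 -> 12/10 <= t -> bb kp t = 1.
Proof. intros. unfold bb, S0, HH1, HH2, SW, SW1. rewrite !St_hi, St1_out by lra. field. auto. Qed.

Definition cc kk kp := exp (- kk / 2 + 5 * kp / 6).

Lemma lo_vals kk kp t : t <= 1/100 ->
  ff kk t = exp (- kk * t) /\ gg kk kp t = 0 /\ RR1 kk kp t = 0 /\ RR2 kk kp t = 0.
Proof. intros. unfold ff, gg, RR1, RR2, SK, SA, SA1, SA2, SK1, SK2.
  rewrite !St_lo, !St1_out, !St2_out by lra. repeat split; ring. Qed.

Lemma hi_vals kk kp t : 12/10 <= t ->
  ff kk t = 0 /\ gg kk kp t = cc kk kp * exp (- kp * t) /\ RR1 kk kp t = 0 /\ RR2 kk kp t = 0.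
Proof. intros. unfold ff, gg, RR1, RR2, SK, SA, SA1, SA2, SK1, SK2, cc, epsv.
  rewrite !St_hi, !St1_out, !St2_out by lra. rewrite Hf_hi by lra. repeat split; try ring.
  rewrite Rmult_1_r, <- !exp_plus. f_equal. field. Qed.

Lemma eg_bound kk kp t : 0 < kp -> epsv kk kp * exp (- kp * Hf t) <= cc kk kp * exp (- kp * t / 3).
Proof. intros. unfold epsv, cc. rewrite <- !exp_plus. apply exp_le.
  assert (Hf t >= t/3). { unfold Hf, SigS. pose proof (Sig_ge0 ((t - 8/10)/(4/10))). lra. }
  nra. Qed.

Lemma ff_b kk kp t : hyp kk kp ->
  Rabs (ff kk t) <= exp (- kk * t) /\ Rabs (ff1 kk t) <= 2 * kk * exp (- kk * t) /\
  Rabs (ff2 kk t) <= 2 * kk^2 * exp (- kk * t).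
Proof. intros [Hk [Hkp Hkp2]]. pose proof (exp_pos (- kk * t)) as He.
  pose proof (St_bnd (65/100) (1/10) t) as HS. fold SK in HS.
  pose proof (SK1_b t). pose proof (SK2_b t).
  unfold ff, ff1, ff2. rewrite !Rabs_mult, !(Rabs_right (exp _)) by lra.
  repeat split.
  - rewrite Rmult_comm. rewrite <- (Rmult_1_l (exp _)) at 2. apply Rmult_le_compat_r; [lra|].
    rewrite Rabs_right; lra.
  - rewrite Rmult_comm. apply Rmult_le_compat_r; [lra|].
    eapply Rle_trans; [apply abs_sub_le|]. rewrite Rabs_mult, Rabs_left1, Rabs_right by lra. nra.
  - rewrite Rmult_comm. apply Rmult_le_compat_r; [lra|].
    eapply Rle_trans; [apply abs_sub_le|]. eapply Rle_trans; [apply Rplus_le_compat_r; apply Rabs_triang|].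
    rewrite !Rabs_mult, !Rabs_right by nra. 
    assert (kk * kk >= 1000000 * kk) by nra. simpl. nra.
Qed.

Lemma gg_b kk kp t : hyp kk kp ->
  Rabs (gg kk kp t) <= cc kk kp * exp (- kp * t / 3) /\
  Rabs (gg1 kk kp t) <= 2 * kp * (cc kk kp * exp (- kp * t / 3)) /\
  Rabs (gg2 kk kp t) <= 2 * kp^2 * (cc kk kp * exp (- kp * t / 3)).
Proof. intros [Hk [Hkp Hkp2]]. pose proof (eg_bound kk kp t ltac:(lra)) as HE.
  set (B := cc kk kp * exp (- kp * t / 3)) in *.
  assert (HE0 : 0 < epsv kk kp * exp (- kp * Hf t)) by (apply Rmult_lt_0_compat; [apply epsv_pos|apply exp_pos]).
  pose proof (St_bnd (6/100) (1/100) t) as HS. fold SA in HS.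
  pose proof (SA1_b t). pose proof (SA2_b t). pose proof (H1_b t) as HB1. pose proof (H2_b t) as HB2.
  unfold gg, gg1, gg2.
  repeat split.
  - replace (epsv kk kp * SA t * exp (- kp * Hf t)) with ((epsv kk kp * exp (- kp * Hf t)) * SA t) by ring.
    rewrite Rabs_mult, Rabs_right by lra. rewrite Rabs_right by lra. nra.
  - rewrite Rabs_mult, Rabs_right by lra.
    assert (Rabs (SA1 t - kp * HH1 t * SA t) <= 2 * kp).
    { eapply Rle_trans; [apply abs_sub_le|].
      assert (Rabs (kp * HH1 t * SA t) <= kp) by (rewrite !Rabs_mult, (Rabs_right kp), (Rabs_right (HH1 t)), (Rabs_right (SA t)) by lra;
        assert (0 <= HH1 t * SA t <= 1) by nra; nra).
      lra. }
    apply Rle_trans with ((epsv kk kp * exp (- kp * Hf t)) * (2 * kp)).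
    apply Rmult_le_compat_l; lra. nra.
  - rewrite Rabs_mult, Rabs_right by lra.
    assert (Rabs (SA2 t - 2 * kp * HH1 t * SA1 t - kp * HH2 t * SA t + kp ^ 2 * HH1 t ^ 2 * SA t) <= 2 * kp^2).
    { eapply Rle_trans; [apply Rabs_triang|]. 
      eapply Rle_trans; [apply Rplus_le_compat_r; apply abs_sub_le|].
      eapply Rle_trans; [apply Rplus_le_compat_r; apply Rplus_le_compat_r; apply abs_sub_le|].
      assert (Rabs (2 * kp * HH1 t * SA1 t) <= 2 * kp * 21875/100).
      { rewrite Rabs_mult. rewrite (Rabs_right (2*kp*HH1 t)) by nra.
        apply Rle_trans with (2*kp*HH1 t * (21875/100)). apply Rmult_le_compat_l; nra. nra. }
      assert (Rabs (kp * HH2 t * SA t) <= kp * 4) by (rewrite !Rabs_mult, (Rabs_right kp), (Rabs_right (HH2 t)), (Rabs_right (SA t)) by lra;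
        assert (0 <= HH2 t * SA t <= 4) by nra; nra).
      assert (Rabs (kp ^ 2 * HH1 t ^ 2 * SA t) <= kp^2).
      { rewrite !Rabs_mult, (Rabs_right (kp^2)), (Rabs_right (HH1 t ^ 2)), (Rabs_right (SA t)) by nra.
        assert (HH1 t ^ 2 <= 1) by nra. assert (0 <= kp^2) by nra.
        assert (0 <= HH1 t ^ 2 * SA t <= 1) by nra. nra. }
      assert (kp * kp >= 1000000 * kp) by nra. simpl in *. lra. }
    apply Rle_trans with ((epsv kk kp * exp (- kp * Hf t)) * (2 * kp^2)).
    apply Rmult_le_compat_l; lra. assert (0 <= kp^2) by nra. nra.
Qed.

Definition ck kk : R -> R := fun x => cos (kk * x).
Definition sk kk : R -> R := fun x => sin (kk * x).
Definition ck1 kk : R -> R := fun x => - kk * sin (kk * x).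
Definition ck2 kk : R -> R := fun x => - kk^2 * cos (kk * x).
Definition sk1 kk : R -> R := fun x => kk * cos (kk * x).
Definition sk2 kk : R -> R := fun x => - kk^2 * sin (kk * x).

Lemma D1_ck kk : D1 (ck kk) (ck1 kk).
Proof. split. intro; unfold ck, ck1; auto_derive; auto; toR; ring.
  apply cont_poly_gen; intro; unfold ck1; auto_derive; auto. Qed.
Lemma D1_ck1 kk : D1 (ck1 kk) (ck2 kk).
Proof. split. intro; unfold ck1, ck2; auto_derive; auto; toR; ring.
  apply cont_poly_gen; intro; unfold ck2; auto_derive; auto. Qed.
Lemma D1_sk kk : D1 (sk kk) (sk1 kk).
Proof. split. intro; unfold sk, sk1; auto_derive; auto; toR; ring.
  apply cont_poly_gen; intro; unfold sk1; auto_derive; auto. Qed.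
Lemma D1_sk1 kk : D1 (sk1 kk) (sk2 kk).
Proof. split. intro; unfold sk1, sk2; auto_derive; auto; toR; ring.
  apply cont_poly_gen; intro; unfold sk2; auto_derive; auto. Qed.
Lemma D1_c1 : D1 c1 c0.
Proof. split. intro; apply d_c1. apply cont_poly_gen; intro; unfold c0; auto_derive; auto. Qed.
Lemma D1_c0 : D1 c0 c0.
Proof. split. intro; apply d_c0. apply cont_poly_gen; intro; unfold c0; auto_derive; auto. Qed.

Lemma cont_of_der (f f' : R -> R) : (forall t, is_derive f t (f' t)) -> continuity f.
Proof. intros H t. apply exd_cont. eexists; apply H. Qed.

Lemma D1_ff kk : D1 (ff kk) (ff1 kk).
Proof. split. intro; apply d_ff. apply cont_of_der with (ff2 kk). intro; apply d_ff1. Qed.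
Lemma D1_ff1 kk : D1 (ff1 kk) (ff2 kk).
Proof. split. intro; apply d_ff1. apply cont_ff2. Qed.
Lemma D1_gg kk kp : D1 (gg kk kp) (gg1 kk kp).
Proof. split. intro; apply d_gg. apply cont_of_der with (gg2 kk kp). intro; apply d_gg1. Qed.
Lemma D1_gg1 kk kp : D1 (gg1 kk kp) (gg2 kk kp).
Proof. split. intro; apply d_gg1. apply cont_gg2. Qed.
Lemma D1_bb kp : kp <> 0 -> D1 (bb kp) (bb1 kp).
Proof. split. intro; apply d_bb; auto. apply cont_bb1. Qed.

Lemma D1_scal (p p' : R -> R) a : D1 p p' -> D1 (fun t => a * p t) (fun t => a * p' t).
Proof. intros [H1 H2]. split. intro t. apply is_derive_scal. auto.
  intro t. apply continuity_pt_mult. apply continuity_pt_const. intros ? ?; auto. apply H2. Qed.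

Lemma D1_R1 kk kp a : kk <> 0 -> D1 (fun t => a * RR1 kk kp t) (fun t => a * RR1' kk kp t).
Proof. intros. apply D1_scal. split. intro; apply d_RR1; auto. apply cont_RR1'. Qed.
Lemma D1_R2 kk kp a : kp <> 0 -> D1 (fun t => a * RR2 kk kp t) (fun t => a * RR2' kk kp t).
Proof. intros. apply D1_scal. split. intro; apply d_RR2; auto. apply cont_RR2'. Qed.

Definition u3 kk kp := add3 (sep (ck kk) c1 (ff kk)) (sep c1 (ck kp) (gg kk kp)).
Definition axx3 kk kp := add3 (sep c1 c1 c1) (sep (ck kk) (ck kp) (fun t => (- / kk) * RR1 kk kp t)).
Definition ayx3 kk kp := sep (sk kk) (sk kp) (fun t => (-2 / kp) * RR1 kk kp t).
Definition axy3 kk kp := sep (sk kk) (sk kp) (fun t => (-2 / kk) * RR2 kk kp t).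
Definition ayy3 kk kp := add3 (sep c1 c1 (bb kp)) (sep (ck kk) (ck kp) (fun t => (- / kp) * RR2 kk kp t)).
Definition AA kk kp := MatField (axx3 kk kp) (axy3 kk kp) (ayx3 kk kp) (ayy3 kk kp).

Lemma exd_of_C1 F : C1_3 F -> (forall x y t, ex_derive (fun s => F s y t) x) /\
  (forall x y t, ex_derive (fun s => F x s t) y) /\ (forall x y t, ex_derive (fun s => F x y s) t).
Proof. intros [_ [H _]]. split; [|split]; intros x y t; apply (H x y t). Qed.

Ltac dadd H1 H2 := let a := fresh in let b := fresh in
  destruct (exd_of_C1 _ H1) as [? [? ?]]; destruct (exd_of_C1 _ H2) as [? [? ?]].

Ltac d1 := match goal with
 | |- D1 (ck _) _ => apply D1_ck | |- D1 (ck1 _) _ => apply D1_ck1 | |- D1 c1 _ => apply D1_c1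
 | |- D1 c0 _ => apply D1_c0 | |- D1 (ff _) _ => apply D1_ff | |- D1 (ff1 _) _ => apply D1_ff1
 | |- D1 (gg _ _) _ => apply D1_gg | |- D1 (gg1 _ _) _ => apply D1_gg1
 | |- D1 (sk _) _ => apply D1_sk | |- D1 (sk1 _) _ => apply D1_sk1 end.

Lemma u3_C1 kk kp : C1_3 (sep (ck kk) c1 (ff kk)) /\ C1_3 (sep c1 (ck kp) (gg kk kp)).
Proof. split; eapply C1_3_sep; d1. Qed.

Lemma dx_u3 kk kp : dx (u3 kk kp) = add3 (sep (ck1 kk) c1 (ff kk)) (sep c0 (ck kp) (gg kk kp)).
Proof. destruct (u3_C1 kk kp) as [Ha Hb]. destruct (exd_of_C1 _ Ha) as [? [? ?]].
  destruct (exd_of_C1 _ Hb) as [? [? ?]]. unfold u3. rewrite dx_add by auto.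
  rewrite (dx_sep _ (ck1 kk)), (dx_sep _ c0); auto. apply D1_c1. apply D1_ck. Qed.
Lemma dy_u3 kk kp : dy (u3 kk kp) = add3 (sep (ck kk) c0 (ff kk)) (sep c1 (ck1 kp) (gg kk kp)).
Proof. destruct (u3_C1 kk kp) as [Ha Hb]. destruct (exd_of_C1 _ Ha) as [? [? ?]].
  destruct (exd_of_C1 _ Hb) as [? [? ?]]. unfold u3. rewrite dy_add by auto.
  rewrite (dy_sep _ _ c0), (dy_sep _ _ (ck1 kp)); auto. apply D1_ck. apply D1_c1. Qed.
Lemma dt_u3 kk kp : dt (u3 kk kp) = add3 (sep (ck kk) c1 (ff1 kk)) (sep c1 (ck kp) (gg1 kk kp)).
Proof. destruct (u3_C1 kk kp) as [Ha Hb]. destruct (exd_of_C1 _ Ha) as [? [? ?]].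
  destruct (exd_of_C1 _ Hb) as [? [? ?]]. unfold u3. rewrite dt_add by auto.
  rewrite (dt_sep _ _ _ (ff1 kk)), (dt_sep _ _ _ (gg1 kk kp)); auto. apply D1_gg. apply D1_ff. Qed.

Ltac c1tac := apply C1_3_add; eapply C1_3_sep; d1.

Lemma dtt_u3 kk kp : dt (dt (u3 kk kp)) = add3 (sep (ck kk) c1 (ff2 kk)) (sep c1 (ck kp) (gg2 kk kp)).
Proof. rewrite dt_u3. 
  assert (Ha : C1_3 (sep (ck kk) c1 (ff1 kk))) by (eapply C1_3_sep; d1).
  assert (Hb : C1_3 (sep c1 (ck kp) (gg1 kk kp))) by (eapply C1_3_sep; d1).
  destruct (exd_of_C1 _ Ha) as [? [? ?]]. destruct (exd_of_C1 _ Hb) as [? [? ?]].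
  rewrite dt_add by auto.
  rewrite (dt_sep _ _ _ (ff2 kk)), (dt_sep _ _ _ (gg2 kk kp)); auto. apply D1_gg1. apply D1_ff1. Qed.

Lemma u3_C2 kk kp : C2_3 (u3 kk kp).
Proof. split; [|split; [|split]].
  - unfold u3; c1tac.
  - rewrite dx_u3; c1tac.
  - rewrite dy_u3; c1tac.
  - rewrite dt_u3; c1tac.
Qed.

Lemma pde_u3 kk kp x y t : kk <> 0 -> kp <> 0 -> pde_holds (AA kk kp) (u3 kk kp) x y t.
Proof.
  intros Hk Hp. unfold pde_holds. rewrite dtt_u3, dx_u3, dy_u3. simpl.
  unfold axx3, axy3, ayx3, ayy3, add3, sep, ck, ck1, sk, c0, c1.
  erewrite is_derive_unique. 2: { auto_derive. auto. reflexivity. }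
  erewrite is_derive_unique. 2: { auto_derive. auto. reflexivity. }
  rewrite (I1 kk kp t Hp), (I2 kk kp t Hk Hp).
  match goal with |- ?L = 0 =>
    replace L with (kk * RR1 kk kp t * ff kk t * cos (kp * y) * (sin (kk * x) ^ 2 + cos (kk * x) ^ 2 - 1)
      + kp * RR2 kk kp t * gg kk kp t * cos (kk * x) * (sin (kp * y) ^ 2 + cos (kp * y) ^ 2 - 1)) by (field; auto) end.
  pose proof (sin2_cos2 (kk * x)). pose proof (sin2_cos2 (kp * y)). unfold Rsqr in *.
  replace (sin (kk * x) ^ 2 + cos (kk * x) ^ 2 - 1) with 0 by (simpl; lra).
  replace (sin (kp * y) ^ 2 + cos (kp * y) ^ 2 - 1) with 0 by (simpl; lra). ring.
Qed.

Lemma dsep3 p p' q q' r r' : D1 p p' -> D1 q q' -> D1 r r' ->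
  dx (sep p q r) = sep p' q r /\ dy (sep p q r) = sep p q' r /\ dt (sep p q r) = sep p q r'.
Proof. intros [Hp _] [Hq _] [Hr _]. split; [|split].
  apply dx_sep; auto. apply dy_sep; auto. apply dt_sep; auto. Qed.

Lemma dadd3 p p' q q' r r' p2 p2' q2 q2' r2 r2' : D1 p p' -> D1 q q' -> D1 r r' ->
  D1 p2 p2' -> D1 q2 q2' -> D1 r2 r2' ->
  dx (add3 (sep p q r) (sep p2 q2 r2)) = add3 (sep p' q r) (sep p2' q2 r2) /\
  dy (add3 (sep p q r) (sep p2 q2 r2)) = add3 (sep p q' r) (sep p2 q2' r2) /\
  dt (add3 (sep p q r) (sep p2 q2 r2)) = add3 (sep p q r') (sep p2 q2 r2').
Proof. intros. assert (Ha : C1_3 (sep p q r)) by (eapply C1_3_sep; eauto).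
  assert (Hb : C1_3 (sep p2 q2 r2)) by (eapply C1_3_sep; eauto).
  destruct (exd_of_C1 _ Ha) as [? [? ?]]. destruct (exd_of_C1 _ Hb) as [? [? ?]].
  destruct (dsep3 p p' q q' r r') as [E1 [E2 E3]]; auto.
  destruct (dsep3 p2 p2' q2 q2' r2 r2') as [F1 [F2 F3]]; auto.
  split; [|split]; [rewrite dx_add, E1, F1 | rewrite dy_add, E2, F2 | rewrite dt_add, E3, F3]; auto. Qed.

Ltac d1' := match goal with
 | |- D1 (ck _) _ => apply D1_ck | |- D1 (ck1 _) _ => apply D1_ck1 | |- D1 c1 _ => apply D1_c1
 | |- D1 c0 _ => apply D1_c0 | |- D1 (ff _) _ => apply D1_ff | |- D1 (ff1 _) _ => apply D1_ff1
 | |- D1 (gg _ _) _ => apply D1_gg | |- D1 (gg1 _ _) _ => apply D1_gg1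
 | |- D1 (sk _) _ => apply D1_sk | |- D1 (sk1 _) _ => apply D1_sk1
 | |- D1 (bb _) _ => apply D1_bb; assumption
 | |- D1 (fun t => _ * RR1 _ _ t) _ => apply D1_R1; assumption
 | |- D1 (fun t => _ * RR2 _ _ t) _ => apply D1_R2; assumption end.

Lemma axx3_C1 kk kp : kk <> 0 -> kp <> 0 -> C1_3 (axx3 kk kp).
Proof. intros. unfold axx3. apply C1_3_add; eapply C1_3_sep; d1'. Qed.
Lemma ayy3_C1 kk kp : kk <> 0 -> kp <> 0 -> C1_3 (ayy3 kk kp).
Proof. intros. unfold ayy3. apply C1_3_add; eapply C1_3_sep; d1'. Qed.
Lemma axy3_C1 kk kp : kk <> 0 -> kp <> 0 -> C1_3 (axy3 kk kp).
Proof. intros. unfold axy3. eapply C1_3_sep; d1'. Qed.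
Lemma ayx3_C1 kk kp : kk <> 0 -> kp <> 0 -> C1_3 (ayx3 kk kp).
Proof. intros. unfold ayx3. eapply C1_3_sep; d1'. Qed.

Lemma d_axx3 kk kp : kk <> 0 -> kp <> 0 ->
  dx (axx3 kk kp) = add3 (sep c0 c1 c1) (sep (ck1 kk) (ck kp) (fun t => (- / kk) * RR1 kk kp t)) /\
  dy (axx3 kk kp) = add3 (sep c1 c0 c1) (sep (ck kk) (ck1 kp) (fun t => (- / kk) * RR1 kk kp t)) /\
  dt (axx3 kk kp) = add3 (sep c1 c1 c0) (sep (ck kk) (ck kp) (fun t => (- / kk) * RR1' kk kp t)).
Proof. intros. unfold axx3. apply dadd3; d1'. Qed.
Lemma d_ayy3 kk kp : kk <> 0 -> kp <> 0 ->
  dx (ayy3 kk kp) = add3 (sep c0 c1 (bb kp)) (sep (ck1 kk) (ck kp) (fun t => (- / kp) * RR2 kk kp t)) /\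
  dy (ayy3 kk kp) = add3 (sep c1 c0 (bb kp)) (sep (ck kk) (ck1 kp) (fun t => (- / kp) * RR2 kk kp t)) /\
  dt (ayy3 kk kp) = add3 (sep c1 c1 (bb1 kp)) (sep (ck kk) (ck kp) (fun t => (- / kp) * RR2' kk kp t)).
Proof. intros. unfold ayy3. apply dadd3; d1'. Qed.
Lemma d_axy3 kk kp : kk <> 0 -> kp <> 0 ->
  dx (axy3 kk kp) = sep (sk1 kk) (sk kp) (fun t => (-2 / kk) * RR2 kk kp t) /\
  dy (axy3 kk kp) = sep (sk kk) (sk1 kp) (fun t => (-2 / kk) * RR2 kk kp t) /\
  dt (axy3 kk kp) = sep (sk kk) (sk kp) (fun t => (-2 / kk) * RR2' kk kp t).
Proof. intros. unfold axy3. apply dsep3; d1'. Qed.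
Lemma d_ayx3 kk kp : kk <> 0 -> kp <> 0 ->
  dx (ayx3 kk kp) = sep (sk1 kk) (sk kp) (fun t => (-2 / kp) * RR1 kk kp t) /\
  dy (ayx3 kk kp) = sep (sk kk) (sk1 kp) (fun t => (-2 / kp) * RR1 kk kp t) /\
  dt (ayx3 kk kp) = sep (sk kk) (sk kp) (fun t => (-2 / kp) * RR1' kk kp t).
Proof. intros. unfold ayx3. apply dsep3; d1'. Qed.

Lemma abc_bnd a b c C : Rabs a <= 1 -> Rabs b <= 1 -> Rabs c <= C -> Rabs (a * b * c) <= C.
Proof. intros. assert (0 <= C) by (pose proof (Rabs_pos c); lra).
  rewrite !Rabs_mult. pose proof (Rabs_pos a); pose proof (Rabs_pos b); pose proof (Rabs_pos c).
  assert (Rabs a * Rabs b <= 1) by nra. nra. Qed.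

Lemma cosb z : Rabs (cos z) <= 1. Proof. apply Rabs_le, COS_bound. Qed.
Lemma sinb z : Rabs (sin z) <= 1. Proof. apply Rabs_le, SIN_bound. Qed.

Lemma scal_b (s r R0 : R) : 0 <= s -> Rabs r <= R0 -> Rabs (s * r) <= s * R0.
Proof. intros. rewrite Rabs_mult, Rabs_right by lra. apply Rmult_le_compat_l; lra. Qed.

Lemma entries_b kk kp x y t : hyp kk kp ->
  (Rabs (dx (axx3 kk kp) x y t) <= 60 /\ Rabs (dy (axx3 kk kp) x y t) <= 60 /\ Rabs (dt (axx3 kk kp) x y t) <= 60) /\
  (Rabs (dx (axy3 kk kp) x y t) <= 60 /\ Rabs (dy (axy3 kk kp) x y t) <= 60 /\ Rabs (dt (axy3 kk kp) x y t) <= 60) /\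
  (Rabs (dx (ayx3 kk kp) x y t) <= 60 /\ Rabs (dy (ayx3 kk kp) x y t) <= 60 /\ Rabs (dt (ayx3 kk kp) x y t) <= 60) /\
  (Rabs (dx (ayy3 kk kp) x y t) <= 60 /\ Rabs (dy (ayy3 kk kp) x y t) <= 60 /\ Rabs (dt (ayy3 kk kp) x y t) <= 60).
Proof.
  intros Hh. pose proof Hh as [Hk [Hkp Hkp2]].
  assert (Hk0 : kk <> 0) by lra. assert (Hp0 : kp <> 0) by lra.
  destruct (RR1_bnd kk kp t Hh) as [B1 B1']. destruct (RR2_bnd kk kp t Hh) as [B2 B2'].
  pose proof (bb1_b kk kp t Hh) as Bb1.
  assert (Q1 : 0 <= kk / kp <= 1). { split. apply Rmult_le_pos; [lra|]. apply Rlt_le, Rinv_0_lt_compat; lra.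
    apply Rmult_le_reg_r with kp; [lra|]. unfold Rdiv. rewrite Rmult_assoc, Rinv_l; lra. }
  assert (Q2 : 0 <= kp / kk <= 2). { split. apply Rmult_le_pos; [lra|]. apply Rlt_le, Rinv_0_lt_compat; lra.
    apply Rmult_le_reg_r with kk; [lra|]. unfold Rdiv. rewrite Rmult_assoc, Rinv_l; lra. }
  assert (Q3 : 0 <= / kk <= 1). { split. apply Rlt_le, Rinv_0_lt_compat; lra.
    rewrite <- Rinv_1. apply Rinv_le_contravar; lra. }
  assert (Q4 : 0 <= / kp <= 1). { split. apply Rlt_le, Rinv_0_lt_compat; lra.
    rewrite <- Rinv_1. apply Rinv_le_contravar; lra. }
  assert (Q5 : Rabs (RR1' kk kp t / kk) <= 1). { unfold Rdiv. rewrite Rabs_mult, (Rabs_right (/kk)) by lra.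
    apply Rmult_le_reg_r with kk; [lra|]. rewrite Rmult_assoc, Rinv_l; lra. }
  assert (Q6 : Rabs (RR1' kk kp t / kp) <= 1). { unfold Rdiv. rewrite Rabs_mult, (Rabs_right (/kp)) by lra.
    apply Rmult_le_reg_r with kp; [lra|]. rewrite Rmult_assoc, Rinv_l; lra. }
  assert (Q7 : Rabs (RR2' kk kp t / kk) <= 1). { unfold Rdiv. rewrite Rabs_mult, (Rabs_right (/kk)) by lra.
    apply Rmult_le_reg_r with kk; [lra|]. rewrite Rmult_assoc, Rinv_l; lra. }
  assert (Q8 : Rabs (RR2' kk kp t / kp) <= 1). { unfold Rdiv. rewrite Rabs_mult, (Rabs_right (/kp)) by lra.
    apply Rmult_le_reg_r with kp; [lra|]. rewrite Rmult_assoc, Rinv_l; lra. }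
  destruct (d_axx3 kk kp Hk0 Hp0) as [A1 [A2 A3]].
  destruct (d_axy3 kk kp Hk0 Hp0) as [B1x [B2x B3x]].
  destruct (d_ayx3 kk kp Hk0 Hp0) as [C1 [C2 C3]].
  destruct (d_ayy3 kk kp Hk0 Hp0) as [D1' [D2 D3]].
  rewrite A1, A2, A3, B1x, B2x, B3x, C1, C2, C3, D1', D2, D3.
  unfold add3, sep, c0, c1, ck, ck1, sk, sk1.
  pose proof (cosb (kk*x)); pose proof (cosb (kp*y)); pose proof (sinb (kk*x)); pose proof (sinb (kp*y)).
  repeat split.
  - replace (0 * 1 * 1 + - kk * sin (kk * x) * cos (kp * y) * (- / kk * RR1 kk kp t))
      with (sin (kk * x) * cos (kp * y) * RR1 kk kp t) by (field; auto). apply abc_bnd; auto; lra.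
  - replace (1 * 0 * 1 + cos (kk * x) * (- kp * sin (kp * y)) * (- / kk * RR1 kk kp t))
      with (cos (kk * x) * sin (kp * y) * (kp / kk * RR1 kk kp t)) by (field; auto).
    apply abc_bnd; auto. eapply Rle_trans. apply scal_b; [lra|apply B1]. lra.
  - replace (1 * 1 * 0 + cos (kk * x) * cos (kp * y) * (- / kk * RR1' kk kp t))
      with (cos (kk * x) * cos (kp * y) * (- (RR1' kk kp t / kk))) by (field; auto).
    apply abc_bnd; auto. rewrite Rabs_Ropp; lra.
  - replace (kk * cos (kk * x) * sin (kp * y) * (-2 / kk * RR2 kk kp t))
      with (cos (kk * x) * sin (kp * y) * (-2 * RR2 kk kp t)) by (field; auto).
    apply abc_bnd; auto. rewrite Rabs_mult. rewrite Rabs_left by lra. lra.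
  - replace (sin (kk * x) * (kp * cos (kp * y)) * (-2 / kk * RR2 kk kp t))
      with (sin (kk * x) * cos (kp * y) * (-2 * (kp / kk * RR2 kk kp t))) by (field; auto).
    apply abc_bnd; auto. rewrite Rabs_mult. rewrite Rabs_left by lra.
    assert (Rabs (kp / kk * RR2 kk kp t) <= 2) by (eapply Rle_trans; [apply scal_b; [lra|apply B2]|nra]). lra.
  - replace (sin (kk * x) * sin (kp * y) * (-2 / kk * RR2' kk kp t))
      with (sin (kk * x) * sin (kp * y) * (-2 * (RR2' kk kp t / kk))) by (field; auto).
    apply abc_bnd; auto. rewrite Rabs_mult. rewrite Rabs_left by lra. lra.
  - replace (kk * cos (kk * x) * sin (kp * y) * (-2 / kp * RR1 kk kp t))
      with (cos (kk * x) * sin (kp * y) * (-2 * (kk / kp * RR1 kk kp t))) by (field; auto).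
    apply abc_bnd; auto. rewrite Rabs_mult. rewrite Rabs_left by lra.
    assert (Rabs (kk / kp * RR1 kk kp t) <= 1) by (eapply Rle_trans; [apply scal_b; [lra|apply B1]|nra]). lra.
  - replace (sin (kk * x) * (kp * cos (kp * y)) * (-2 / kp * RR1 kk kp t))
      with (sin (kk * x) * cos (kp * y) * (-2 * RR1 kk kp t)) by (field; auto).
    apply abc_bnd; auto. rewrite Rabs_mult. rewrite Rabs_left by lra. lra.
  - replace (sin (kk * x) * sin (kp * y) * (-2 / kp * RR1' kk kp t))
      with (sin (kk * x) * sin (kp * y) * (-2 * (RR1' kk kp t / kp))) by (field; auto).
    apply abc_bnd; auto. rewrite Rabs_mult. rewrite Rabs_left by lra. lra.
  - replace (0 * 1 * bb kp t + - kk * sin (kk * x) * cos (kp * y) * (- / kp * RR2 kk kp t))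
      with (sin (kk * x) * cos (kp * y) * (kk / kp * RR2 kk kp t)) by (field; auto).
    apply abc_bnd; auto. eapply Rle_trans. apply scal_b; [lra|apply B2]. lra.
  - replace (1 * 0 * bb kp t + cos (kk * x) * (- kp * sin (kp * y)) * (- / kp * RR2 kk kp t))
      with (cos (kk * x) * sin (kp * y) * RR2 kk kp t) by (field; auto). apply abc_bnd; auto; lra.
  - replace (1 * 1 * bb1 kp t + cos (kk * x) * cos (kp * y) * (- / kp * RR2' kk kp t))
      with (bb1 kp t + cos (kk * x) * cos (kp * y) * (- (RR2' kk kp t / kp))) by (field; auto).
    eapply Rle_trans; [apply Rabs_triang|].
    assert (Rabs (cos (kk * x) * cos (kp * y) * - (RR2' kk kp t / kp)) <= 1) by
      (apply abc_bnd; auto; rewrite Rabs_Ropp; lra). lra.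
Qed.

Lemma ellip kk kp x y t xi1 xi2 : hyp kk kp ->
  let A := AA kk kp in
  let q := xi1 * (axx A x y t * xi1 + axy A x y t * xi2) + xi2 * (ayx A x y t * xi1 + ayy A x y t * xi2) in
  / 80 * (xi1 ^ 2 + xi2 ^ 2) <= q /\ q <= 80 * (xi1 ^ 2 + xi2 ^ 2).
Proof.
  intros Hh A q. pose proof Hh as [Hk [Hkp Hkp2]].
  destruct (RR1_bnd kk kp t Hh) as [B1 _]. destruct (RR2_bnd kk kp t Hh) as [B2 _].
  pose proof (bb_b kk kp t Hh) as Bb.
  pose proof (cosb (kk*x)); pose proof (cosb (kp*y)); pose proof (sinb (kk*x)); pose proof (sinb (kp*y)).
  assert (Q3 : 0 <= / kk <= 1/1000000). { split. apply Rlt_le, Rinv_0_lt_compat; lra.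
    replace (1/1000000) with (/1000000) by field. apply Rinv_le_contravar; lra. }
  assert (Q4 : 0 <= / kp <= 1/1000000). { split. apply Rlt_le, Rinv_0_lt_compat; lra.
    replace (1/1000000) with (/1000000) by field. apply Rinv_le_contravar; lra. }
  assert (E1 : Rabs (axx A x y t - 1) <= 1/100000).
  { unfold A; simpl. unfold axx3, add3, sep, c1, ck.
    replace (1 * 1 * 1 + cos (kk * x) * cos (kp * y) * (- / kk * RR1 kk kp t) - 1) with
      (cos (kk * x) * cos (kp * y) * (- / kk * RR1 kk kp t)) by ring.
    apply abc_bnd; auto. rewrite Rabs_mult, Rabs_Ropp, Rabs_right by lra.
    assert (/kk * Rabs (RR1 kk kp t) <= /kk * 1) by (apply Rmult_le_compat_l; lra). lra. }
  assert (E2 : Rabs (axy A x y t) <= 1/100000).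
  { unfold A; simpl. unfold axy3, sep, sk.
    apply abc_bnd; auto. unfold Rdiv. rewrite Rmult_assoc, Rabs_mult, Rabs_left, Rabs_mult, Rabs_right by lra.
    assert (/kk * Rabs (RR2 kk kp t) <= /kk * 1) by (apply Rmult_le_compat_l; lra). lra. }
  assert (E3 : Rabs (ayx A x y t) <= 1/100000).
  { unfold A; simpl. unfold ayx3, sep, sk.
    apply abc_bnd; auto. unfold Rdiv. rewrite Rmult_assoc, Rabs_mult, Rabs_left, Rabs_mult, Rabs_right by lra.
    assert (/kp * Rabs (RR1 kk kp t) <= /kp * 1) by (apply Rmult_le_compat_l; lra). lra. }
  assert (E4 : Rabs (ayy A x y t - bb kp t) <= 1/100000).
  { unfold A; simpl. unfold ayy3, add3, sep, c1, ck.
    replace (1 * 1 * bb kp t + cos (kk * x) * cos (kp * y) * (- / kp * RR2 kk kp t) - bb kp t) with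
      (cos (kk * x) * cos (kp * y) * (- / kp * RR2 kk kp t)) by ring.
    apply abc_bnd; auto. rewrite Rabs_mult, Rabs_Ropp, Rabs_right by lra.
    assert (/kp * Rabs (RR2 kk kp t) <= /kp * 1) by (apply Rmult_le_compat_l; lra). lra. }
  unfold q. clearbody A. clear q.
  set (a := axx A x y t) in *. set (b := axy A x y t) in *. set (c := ayx A x y t) in *. set (d := ayy A x y t) in *.
  apply Rabs_le_between' in E1. apply Rabs_le_between' in E4.
  assert (Ebc : Rabs (b + c) <= 2/100000) by (eapply Rle_trans; [apply Rabs_triang|lra]).
  assert (HX2 : 2 * Rabs (xi1 * xi2) <= xi1^2 + xi2^2).
  { rewrite Rabs_mult. pose proof (pow2_ge_0 (Rabs xi1 - Rabs xi2)).
    assert (Rabs xi1 * Rabs xi1 = xi1 * xi1) by (rewrite <- Rabs_mult; apply Rabs_right; nra).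
    assert (Rabs xi2 * Rabs xi2 = xi2 * xi2) by (rewrite <- Rabs_mult; apply Rabs_right; nra).
    simpl in *. nra. }
  assert (HX3 : Rabs ((b + c) * (xi1 * xi2)) <= 2/100000 * Rabs (xi1 * xi2)).
  { rewrite Rabs_mult. apply Rmult_le_compat_r; [apply Rabs_pos|auto]. }
  apply Rabs_le_between in HX3. pose proof (Rabs_pos (xi1 * xi2)).
  assert (0 <= xi1^2) by nra. assert (0 <= xi2^2) by nra.
  assert (a * xi1^2 >= (1 - 1/100000) * xi1^2) by nra.
  assert (a * xi1^2 <= (1 + 1/100000) * xi1^2) by nra.
  assert (d * xi2^2 >= (1/10 - 1/100000) * xi2^2) by nra.
  assert (d * xi2^2 <= (2 + 1/100000) * xi2^2) by nra.
  replace (xi1 * (a * xi1 + b * xi2) + xi2 * (c * xi1 + d * xi2)) with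
    (a * xi1^2 + (b + c) * (xi1 * xi2) + d * xi2^2) by ring.
  split; nra.
Qed.

Definition per (kk : R) := forall x, cos (kk * (x + 2 * PI)) = cos (kk * x) /\ sin (kk * (x + 2 * PI)) = sin (kk * x).

Lemma per_IZR (k : Z) : (0 <= k)%Z -> per (IZR k).
Proof. intros Hk x. rewrite <- (Z2Nat.id k Hk). rewrite <- INR_IZR_INZ.
  replace (INR (Z.to_nat k) * (x + 2 * PI)) with (INR (Z.to_nat k) * x + 2 * INR (Z.to_nat k) * PI) by ring.
  rewrite cos_period, sin_period. auto. Qed.

Lemma periodic_sep p q r : (forall x, p (x + 2 * PI) = p x) -> (forall x, q (x + 2 * PI) = q x) ->
  periodic_T2 (sep p q r).
Proof. intros Hp Hq x y t. unfold sep. rewrite Hp, Hq. auto. Qed.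
Lemma periodic_add F G : periodic_T2 F -> periodic_T2 G -> periodic_T2 (add3 F G).
Proof. intros HF HG x y t. unfold add3. destruct (HF x y t), (HG x y t). split; congruence. Qed.

Ltac pertac Hk Hp := repeat first [ apply periodic_add | apply periodic_sep ];
  intro; unfold ck, sk, c1; try reflexivity; first [apply Hk | apply Hp].

Lemma lo_all kk kp x y t : kk <> 0 -> kp <> 0 -> t <= 1/100 ->
  u3 kk kp x y t = cos (kk * x) * exp (- kk * t) /\ is_Id_at (AA kk kp) x y t.
Proof. intros. destruct (lo_vals kk kp t H1) as [E1 [E2 [E3 E4]]].
  unfold u3, is_Id_at, AA; simpl. unfold axx3, axy3, ayx3, ayy3, add3, sep, ck, c1, sk.
  rewrite E1, E2, E3, E4, bb_lo by auto. repeat split; ring. Qed.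

Lemma hi_all kk kp x y t : kk <> 0 -> kp <> 0 -> 12/10 <= t ->
  u3 kk kp x y t = cc kk kp * cos (kp * y) * exp (- kp * t) /\ is_Id_at (AA kk kp) x y t.
Proof. intros. destruct (hi_vals kk kp t H1) as [E1 [E2 [E3 E4]]].
  unfold u3, is_Id_at, AA; simpl. unfold axx3, axy3, ayx3, ayy3, add3, sep, ck, c1, sk.
  rewrite E1, E2, E3, E4, bb_hi by auto. repeat split; ring. Qed.

Lemma Dn1 (f f1 : R -> R) : (forall t, is_derive f t (f1 t)) -> forall t, Derive_n f 1 t = f1 t.
Proof. intros H t. simpl. apply is_derive_unique. exact (H t). Qed.
Lemma Dn2 (f f1 f2 : R -> R) : (forall t, is_derive f t (f1 t)) -> (forall t, is_derive f1 t (f2 t)) ->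
  forall t, Derive_n f 2 t = f2 t.
Proof. intros H H' t. change (Derive_n f 2 t) with (Derive (Derive_n f 1) t).
  apply is_derive_unique. apply is_derive_ext with f1. intro; symmetry; apply Dn1; auto. apply H'. Qed.

Lemma C2_1_of (f f1 f2 : R -> R) : (forall t, is_derive f t (f1 t)) -> (forall t, is_derive f1 t (f2 t)) ->
  continuity f2 -> C2_1 f.
Proof. intros H H' Hc. split; [|split].
  - intro t; eexists; apply H.
  - intro t. apply ex_derive_ext with f1. intro; symmetry; apply is_derive_unique; apply H. eexists; apply H'.
  - intro t. apply continuity_pt_ext with f2. intro; symmetry; apply Dn2 with f1; auto. apply Hc. Qed.

Theorem mainTheorem9 :
  exists C K M : R, 2 <= C /\
  forall k k' : Z,
    K <= IZR k -> (k < k')%Z -> (k' <= 2 * k)%Z ->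
    let c := exp (- IZR k / 2 + 5 * IZR k' / 6) in
    exists (u : fun3) (A : mat_field) (f g : R -> R),
      transforms (fun x y t => cos (IZR k * x) * exp (- IZR k * t))
                 (fun x y t => c * cos (IZR k' * y) * exp (- IZR k' * t))
                 0 C u A /\
      reg_class 80 60 A /\
      C2_1 f /\ C2_1 g /\
      (forall x y t, 0 <= t <= C ->
         u x y t = f t * cos (IZR k * x) + g t * cos (IZR k' * y)) /\
      (forall (alpha : nat) t, (alpha <= 2)%nat -> 0 <= t <= C ->
         Rabs (Derive_n f alpha t)
           <= M * Rpower (IZR k) (7 * INR alpha / 3) * exp (- IZR k * t) /\
         Rabs (Derive_n g alpha t)
           <= M * IZR k' ^ alpha * c * exp (- IZR k' * t / 3)) /\
      (forall x y t, 0 <= t <= 1 / 100 ->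
         u x y t = cos (IZR k * x) * exp (- IZR k * t) /\ is_Id_at A x y t) /\
      (forall x y t, C - 1 / 100 <= t <= C ->
         u x y t = c * cos (IZR k' * y) * exp (- IZR k' * t) /\ is_Id_at A x y t).
Proof.
  exists 2, 1000000, 2. split; [lra|].
  intros k k' Hk Hkk Hk2 c.
  assert (Hk0 : (0 <= k)%Z) by (apply le_IZR; lra).
  assert (Hh : hyp (IZR k) (IZR k')).
  { split; [lra|split]. apply IZR_lt; auto. rewrite <- mult_IZR. apply IZR_le; auto. }
  pose proof (per_IZR k Hk0) as Pk. pose proof (per_IZR k' ltac:(lia)) as Pk'.
  unfold c. change (exp (- IZR k / 2 + 5 * IZR k' / 6)) with (cc (IZR k) (IZR k')). clear c.
  set (kk := IZR k) in *. set (kp := IZR k') in *.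
  pose proof Hh as [Hk1 [Hkp1 Hkp2]].
  assert (Nk : kk <> 0) by lra. assert (Np : kp <> 0) by lra.
  exists (u3 kk kp), (AA kk kp), (ff kk), (gg kk kp).
  split; [|split; [|split; [|split; [|split; [|split; [|split]]]]]].
  -
    split; [unfold u3; pertac Pk Pk'|].
    split; [unfold AA; simpl; unfold axx3; pertac Pk Pk'|].
    split; [unfold AA; simpl; unfold axy3; pertac Pk Pk'|].
    split; [unfold AA; simpl; unfold ayx3; pertac Pk Pk'|].
    split; [unfold AA; simpl; unfold ayy3; pertac Pk Pk'|].
    split; [apply u3_C2|].
    split; [apply axx3_C1; auto|]. split; [apply axy3_C1; auto|].
    split; [apply ayx3_C1; auto|]. split; [apply ayy3_C1; auto|].
    split; [intros; apply pde_u3; auto|].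
    split.
    + intros x y t Ht. apply lo_all; auto; lra.
    + intros x y t Ht. apply hi_all; auto; lra.
  -
    split.
    + intros x y t xi1 xi2. apply (ellip kk kp x y t xi1 xi2 Hh).
    + intros a Ha. unfold AA in Ha; simpl in Ha.
      destruct Ha as [E|[E|[E|E]]]; subst a; (split; [first [apply axx3_C1 | apply axy3_C1 | apply ayx3_C1 | apply ayy3_C1]; auto|]);
      intros x y t; destruct (entries_b kk kp x y t Hh) as [Ea [Eb [Ec Ed]]]; auto.
  - apply C2_1_of with (ff1 kk) (ff2 kk). apply d_ff. apply d_ff1. apply cont_ff2.
  - apply C2_1_of with (gg1 kk kp) (gg2 kk kp). apply d_gg. apply d_gg1. apply cont_gg2.
  - intros x y t _. unfold u3, add3, sep, ck, c1. ring.
  - intros alpha t Ha Ht.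
    destruct (ff_b kk kp t Hh) as [F0 [F1 F2]]. destruct (gg_b kk kp t Hh) as [G0 [G1 G2]].
    pose proof (exp_pos (- kk * t)) as Ef. 
    assert (Eg : 0 < cc kk kp * exp (- kp * t / 3)) by (apply Rmult_lt_0_compat; apply exp_pos).
    destruct alpha as [|[|[|alpha]]]; [ | | | lia].
    + replace (7 * INR 0 / 3) with 0 by (simpl; field). rewrite Rpower_O by lra.
      simpl Derive_n. split; [lra|]. simpl pow. lra.
    + rewrite (Dn1 _ _ (d_ff kk)), (Dn1 _ _ (d_gg kk kp)).
      assert (kk <= Rpower kk (7 * INR 1 / 3)).
      { rewrite <- (Rpower_1 kk) at 1 by lra. apply Rle_Rpower; [lra|]. simpl; lra. }
      split; [nra|]. simpl pow. nra.
    + rewrite (Dn2 _ _ _ (d_ff kk) (d_ff1 kk)), (Dn2 _ _ _ (d_gg kk kp) (d_gg1 kk kp)).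
      assert (kk^2 <= Rpower kk (7 * INR 2 / 3)).
      { rewrite <- (Rpower_pow 2 kk) by lra. apply Rle_Rpower; [lra|]. simpl; lra. }
      split; [nra|]. nra.
  - intros x y t Ht. apply lo_all; auto; lra.
  - intros x y t Ht. apply hi_all; auto; lra.
Qed.
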